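(* Let $R>0$, $m\in\mathbb Z$, $\lambda>0$, and fix a smooth $f:[0,R]\to[0,1]$ with $f(0)=1$, $f(R)=0$ and $0\ge f'(r)\ge-C_fr^2$ for all $r$. There is a constant $C=C(\lambda,m,R,f)$ such that for every $\epsilon>0$, $T>0$ and every smooth configuration $U=(\phi,A)$, $A=A_0dy^0+A_1dy^1+A_2dy^2$, on $[0,T]\times\overline{B_\nu(R)}$ and every $t\in(0,T)$, $$|\mathcal D^\nu_m(U(t);R)-\mathcal D^\nu_m(U(0);R)|\le C\int_{(0,t)\times B_\nu(R)}\Big(|D_0\phi|^2+\epsilon^2(F_{01}^2+F_{02}^2)+|y^\nu|^2e^\nu_{\epsilon,\lambda}(U)\Big)\,dy^\nu\,dy^0.$$
   Context: Points are $(y^0,y^\nu)$, $y^\nu=(y^1,y^2)\in\mathbb R^2$, $B_\nu(R)=\{|y^\nu|<R\}$. $D_a\phi=\partial_a\phi-iA_a\phi$, $F_{ab}=\partial_aA_b-\partial_bA_a$, $\langle f,g\rangle=\mathrm{Re}(f\bar g)$. $U(s)$ denotes the 2d configuration $(\phi(s,\cdot),A_1(s,\cdot)dy^1+A_2(s,\cdot)dy^2)$. For a 2d configuration $V=(\phi,A_1dy^1+A_2dy^2)$: $e^\nu_{\epsilon,\lambda}(V)=\frac12(|D_1\phi|^2+|D_2\phi|^2)+\frac{\epsilon^2}4F_{12}^2+\frac{\lambda}{8\epsilon^2}(|\phi|^2-1)^2$, $j(V)=(\langle i\phi,D_1\phi\rangle,\langle i\phi,D_2\phi\rangle)$, $\omega(V)=\frac12(\partial_1j_2-\partial_2j_1+F_{12})$,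 and the vorticity confinement functional is $\mathcal D^\nu_m(V;R)=\pi m-\int_{B_\nu(R)}f(|y^\nu|)\,\omega(V)(y^\nu)\,dy^\nu$. In the integrand, $e^\nu_{\epsilon,\lambda}(U)$ at $(y^0,y^\nu)$ means $e^\nu_{\epsilon,\lambda}(U(y^0))(y^\nu)$. *)

(* Defs.v *)
From Stdlib Require Import Reals Lra ZArith List ClassicalEpsilon.
Open Scope R_scope.

(** Total derivative operator on R -> R (0 where not differentiable). *)
Definition deriv1 (g : R -> R) (x : R) : R :=
  match excluded_middle_informative (exists l, derivable_pt_lim g x l) with
  | left H => proj1_sig (constructive_indefinite_description _ H)
  | right _ => 0
  end.

Definition smooth1 (g : R -> R) : Prop :=
  forall (n : nat) (x : R), exists l, derivable_pt_lim (Nat.iter n deriv1 g) x l.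

(** Functions of space-time points (y0,y1,y2). *)
Definition F3 := R -> R -> R -> R.

Inductive dir := d0 | d1 | d2.

Definition pd (d : dir) (g : F3) : F3 :=
  fun y0 y1 y2 =>
    match d with
    | d0 => deriv1 (fun s => g s y1 y2) y0
    | d1 => deriv1 (fun s => g y0 s y2) y1
    | d2 => deriv1 (fun s => g y0 y1 s) y2
    end.

Definition has_pd (d : dir) (g : F3) : Prop :=
  forall y0 y1 y2,
    match d with
    | d0 => exists l, derivable_pt_lim (fun s => g s y1 y2) y0 l
    | d1 => exists l, derivable_pt_lim (fun s => g y0 s y2) y1 l
    | d2 => exists l, derivable_pt_lim (fun s => g y0 y1 s) y2 l
    end.

Definition continuous3 (g : F3) : Prop :=
  forall x0 x1 x2 eps, 0 < eps -> exists del, 0 < del /\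
    forall y0 y1 y2, Rabs (y0 - x0) < del -> Rabs (y1 - x1) < del ->
      Rabs (y2 - x2) < del -> Rabs (g y0 y1 y2 - g x0 x1 x2) < eps.

Fixpoint iter_pd (ds : list dir) (g : F3) : F3 :=
  match ds with
  | nil => g
  | d :: ds' => pd d (iter_pd ds' g)
  end.

Definition smooth3 (g : F3) : Prop :=
  forall ds : list dir, continuous3 (iter_pd ds g) /\ forall d, has_pd d (iter_pd ds g).

(** Total Riemann integral on [a,b] (0 if not Riemann integrable). *)
Definition RI (g : R -> R) (a b : R) : R :=
  match excluded_middle_informative (exists pr : Riemann_integrable g a b, True) with
  | left H => RiemannInt (proj1_sig (constructive_indefinite_description _ H))
  | right _ => 0
  end.

(** Integral over the disc B_nu(R) (iterated, Cartesian coordinates). *)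
Definition disc_int (Rad : R) (h : R -> R -> R) : R :=
  RI (fun y1 => RI (fun y2 => h y1 y2) (- sqrt (Rad ^ 2 - y1 ^ 2)) (sqrt (Rad ^ 2 - y1 ^ 2)))
     (- Rad) Rad.

(** Configuration U = (phi, A0 dy0 + A1 dy1 + A2 dy2), phi = u + i v. *)
Record config := mkConfig { cu : F3; cv : F3; cA0 : F3; cA1 : F3; cA2 : F3 }.

Definition smooth_config (U : config) : Prop :=
  smooth3 (cu U) /\ smooth3 (cv U) /\ smooth3 (cA0 U) /\ smooth3 (cA1 U) /\ smooth3 (cA2 U).

Definition cA (U : config) (d : dir) : F3 :=
  match d with d0 => cA0 U | d1 => cA1 U | d2 => cA2 U end.

(** D_a phi = d_a phi - i A_a phi, real and imaginary parts. *)
Definition Dre (U : config) (d : dir) : F3 :=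
  fun y0 y1 y2 => pd d (cu U) y0 y1 y2 + cA U d y0 y1 y2 * cv U y0 y1 y2.
Definition Dim (U : config) (d : dir) : F3 :=
  fun y0 y1 y2 => pd d (cv U) y0 y1 y2 - cA U d y0 y1 y2 * cu U y0 y1 y2.

Definition Dsq (U : config) (d : dir) : F3 :=
  fun y0 y1 y2 => Dre U d y0 y1 y2 ^ 2 + Dim U d y0 y1 y2 ^ 2.

Definition Fc (U : config) (a b : dir) : F3 :=
  fun y0 y1 y2 => pd a (cA U b) y0 y1 y2 - pd b (cA U a) y0 y1 y2.

Definition phisq (U : config) : F3 :=
  fun y0 y1 y2 => cu U y0 y1 y2 ^ 2 + cv U y0 y1 y2 ^ 2.

Definition e_nu (eps lam : R) (U : config) : F3 :=
  fun y0 y1 y2 =>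
    / 2 * (Dsq U d1 y0 y1 y2 + Dsq U d2 y0 y1 y2)
    + eps ^ 2 / 4 * Fc U d1 d2 y0 y1 y2 ^ 2
    + lam / (8 * eps ^ 2) * (phisq U y0 y1 y2 - 1) ^ 2.

(** j_a = <i phi, D_a phi> = Re(i phi * conj(D_a phi)), a = 1,2. *)
Definition jc (U : config) (d : dir) : F3 :=
  fun y0 y1 y2 => - cv U y0 y1 y2 * Dre U d y0 y1 y2 + cu U y0 y1 y2 * Dim U d y0 y1 y2.

Definition omega (U : config) : F3 :=
  fun y0 y1 y2 =>
    / 2 * (pd d1 (jc U d2) y0 y1 y2 - pd d2 (jc U d1) y0 y1 y2 + Fc U d1 d2 y0 y1 y2).

Definition Dconf (m : Z) (Rad : R) (f : R -> R) (U : config) (s : R) : R :=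
  PI * IZR m - disc_int Rad (fun y1 y2 => f (sqrt (y1 ^ 2 + y2 ^ 2)) * omega U s y1 y2).

Definition rhs_density (eps lam : R) (U : config) : F3 :=
  fun y0 y1 y2 =>
    Dsq U d0 y0 y1 y2
    + eps ^ 2 * (Fc U d0 d1 y0 y1 y2 ^ 2 + Fc U d0 d2 y0 y1 y2 ^ 2)
    + (y1 ^ 2 + y2 ^ 2) * e_nu eps lam U y0 y1 y2.

Definition spacetime_int (t Rad : R) (h : F3) : R :=
  RI (fun y0 => disc_int Rad (h y0)) 0 t.

(* Main.v *)
Require Import Defs.
From Stdlib Require Import Reals Lra ZArith List Classical ClassicalEpsilon FunctionalExtensionality.
From Coquelicot Require Import Coquelicot.
Require Import Defs.
Open Scope R_scope.

Definition tr3 (g : F3) : R * (R * R) -> R :=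
  fun q => g (fst q) (fst (snd q)) (snd (snd q)).

Lemma ball_R (x e y : R) : ball x e y <-> Rabs (y - x) < e.
Proof. reflexivity. Qed.

Lemma c3_equiv (g : F3) : continuous3 g <->
  forall x0 x1 x2, continuous (tr3 g) (x0,(x1,x2)).
Proof.
  split.
  - intros H x0 x1 x2. unfold continuous. apply filterlim_locally.
    intros eps. destruct (H x0 x1 x2 eps (cond_pos eps)) as [del [Hd Hy]].
    exists (mkposreal del Hd). intros [y0 [y1 y2]] [B0 [B1 B2]].
    apply ball_R. unfold tr3; simpl. apply Hy; assumption.
  - intros H x0 x1 x2 eps He.
    specialize (H x0 x1 x2). unfold continuous in H.
    apply (filterlim_locally (tr3 g)) with (eps := mkposreal eps He) in H.
    destruct H as [del Hd].
    exists del. split. apply cond_pos. intros y0 y1 y2 h0 h1 h2.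
    apply (Hd (y0,(y1,y2))). repeat split; assumption.
Qed.

Lemma c3_plus g h : continuous3 g -> continuous3 h ->
  continuous3 (fun a b c => g a b c + h a b c).
Proof.
  rewrite !c3_equiv. intros Hg Hh x0 x1 x2.
  apply (continuous_plus (V:=R_NormedModule) (tr3 g) (tr3 h)); auto.
Qed.

Lemma c3_mult g h : continuous3 g -> continuous3 h ->
  continuous3 (fun a b c => g a b c * h a b c).
Proof.
  rewrite !c3_equiv. intros Hg Hh x0 x1 x2.
  apply (continuous_mult (K:=R_AbsRing) (tr3 g) (tr3 h)); auto.
Qed.

Lemma c3_const c : continuous3 (fun _ _ _ => c).
Proof. rewrite c3_equiv. intros. apply continuous_const. Qed.

Lemma c3_comp (h : R -> R) g : (forall x, continuous h x) -> continuous3 g ->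
  continuous3 (fun a b c => h (g a b c)).
Proof.
  rewrite !c3_equiv. intros Hh Hg x0 x1 x2.
  apply (continuous_comp (tr3 g) h); auto.
Qed.

Lemma c3_p0 : continuous3 (fun a _ _ => a).
Proof. intros x0 x1 x2 e He. exists e; split; auto. Qed.
Lemma c3_p1 : continuous3 (fun _ b _ => b).
Proof. intros x0 x1 x2 e He. exists e; split; auto. Qed.
Lemma c3_p2 : continuous3 (fun _ _ c => c).
Proof. intros x0 x1 x2 e He. exists e; split; auto. Qed.

Lemma c3_opp g : continuous3 g -> continuous3 (fun a b c => - g a b c).
Proof.
  intro H. apply (c3_comp Ropp g); auto. intro x.
  apply continuity_pt_filterlim. apply continuity_pt_opp. apply continuity_pt_id.
Qed.

Lemma c3_minus g h : continuous3 g -> continuous3 h ->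
  continuous3 (fun a b c => g a b c - h a b c).
Proof. intros. unfold Rminus. apply c3_plus; auto. apply c3_opp; auto. Qed.

Lemma c3_ext g h : (forall a b c, g a b c = h a b c) -> continuous3 g -> continuous3 h.
Proof.
  intros E H. replace h with g; auto.
  extensionality a; extensionality b; extensionality c; auto.
Qed.

Lemma c3_pow g n : continuous3 g -> continuous3 (fun a b c => g a b c ^ n).
Proof.
  intro H; induction n; simpl.
  - apply c3_const.
  - apply c3_mult; auto.
Qed.

Lemma deriv1_spec h x l : derivable_pt_lim h x l -> deriv1 h x = l.
Proof.
  intro H. unfold deriv1.
  destruct (excluded_middle_informative _) as [E|E].
  - destruct (constructive_indefinite_description _ E) as [l' H']; simpl.
    eapply uniqueness_limite; eauto.
  - exfalso; apply E; eauto.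
Qed.

Definition line (d:dir) (g:F3) y0 y1 y2 : R -> R :=
  match d with d0 => fun s => g s y1 y2 | d1 => fun s => g y0 s y2 | d2 => fun s => g y0 y1 s end.
Definition crd d (y0 y1 y2 : R) := match d with d0 => y0 | d1 => y1 | d2 => y2 end.

Lemma pd_eq d g y0 y1 y2 : pd d g y0 y1 y2 = deriv1 (line d g y0 y1 y2) (crd d y0 y1 y2).
Proof. destruct d; reflexivity. Qed.

Lemma has_pd_eq d g : has_pd d g <-> forall y0 y1 y2, exists l,
  derivable_pt_lim (line d g y0 y1 y2) (crd d y0 y1 y2) l.
Proof. destruct d; reflexivity. Qed.

Lemma pd_spec d g y0 y1 y2 : has_pd d g ->
  derivable_pt_lim (line d g y0 y1 y2) (crd d y0 y1 y2) (pd d g y0 y1 y2).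
Proof.
  intro H. rewrite has_pd_eq in H. destruct (H y0 y1 y2) as [l Hl].
  rewrite pd_eq. rewrite (deriv1_spec _ _ _ Hl). exact Hl.
Qed.

Lemma pd_uniq d g y0 y1 y2 l :
  derivable_pt_lim (line d g y0 y1 y2) (crd d y0 y1 y2) l -> pd d g y0 y1 y2 = l.
Proof. intro H. rewrite pd_eq. apply deriv1_spec; auto. Qed.

Lemma line_plus d g h y0 y1 y2 :
  line d (fun a b c => g a b c + h a b c) y0 y1 y2 =
  (fun s => line d g y0 y1 y2 s + line d h y0 y1 y2 s).
Proof. destruct d; reflexivity. Qed.
Lemma line_mult d g h y0 y1 y2 :
  line d (fun a b c => g a b c * h a b c) y0 y1 y2 =
  (fun s => line d g y0 y1 y2 s * line d h y0 y1 y2 s).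
Proof. destruct d; reflexivity. Qed.
Lemma line_const d c y0 y1 y2 : line d (fun _ _ _ => c) y0 y1 y2 = (fun _ => c).
Proof. destruct d; reflexivity. Qed.
Lemma line_at d g y0 y1 y2 : line d g y0 y1 y2 (crd d y0 y1 y2) = g y0 y1 y2.
Proof. destruct d; reflexivity. Qed.

Lemma dpl_plus d g h y0 y1 y2 : has_pd d g -> has_pd d h ->
  derivable_pt_lim (line d (fun a b c => g a b c + h a b c) y0 y1 y2) (crd d y0 y1 y2)
    (pd d g y0 y1 y2 + pd d h y0 y1 y2).
Proof.
  intros Hg Hh. rewrite line_plus.
  exact (derivable_pt_lim_plus _ _ _ _ _ (pd_spec d g y0 y1 y2 Hg) (pd_spec d h y0 y1 y2 Hh)).
Qed.

Lemma dpl_mult d g h y0 y1 y2 : has_pd d g -> has_pd d h ->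
  derivable_pt_lim (line d (fun a b c => g a b c * h a b c) y0 y1 y2) (crd d y0 y1 y2)
    (pd d g y0 y1 y2 * h y0 y1 y2 + g y0 y1 y2 * pd d h y0 y1 y2).
Proof.
  intros Hg Hh. rewrite line_mult.
  assert (E := derivable_pt_lim_mult _ _ _ _ _ (pd_spec d g y0 y1 y2 Hg) (pd_spec d h y0 y1 y2 Hh)).
  rewrite !line_at in E. exact E.
Qed.

Lemma has_pd_plus d g h : has_pd d g -> has_pd d h -> has_pd d (fun a b c => g a b c + h a b c).
Proof. intros. apply has_pd_eq. intros. eexists. apply dpl_plus; auto. Qed.
Lemma has_pd_mult d g h : has_pd d g -> has_pd d h -> has_pd d (fun a b c => g a b c * h a b c).
Proof. intros. apply has_pd_eq. intros. eexists. apply dpl_mult; auto. Qed.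
Lemma has_pd_const d c : has_pd d (fun _ _ _ => c).
Proof. apply has_pd_eq. intros. rewrite line_const. exists 0. apply derivable_pt_lim_const. Qed.

Lemma pd_plus d g h : has_pd d g -> has_pd d h ->
  pd d (fun a b c => g a b c + h a b c) = (fun a b c => pd d g a b c + pd d h a b c).
Proof.
  intros. extensionality a; extensionality b; extensionality c.
  apply pd_uniq. apply dpl_plus; auto.
Qed.
Lemma pd_mult d g h : has_pd d g -> has_pd d h ->
  pd d (fun a b c => g a b c * h a b c) =
  (fun a b c => pd d g a b c * h a b c + g a b c * pd d h a b c).
Proof.
  intros. extensionality a; extensionality b; extensionality c.
  apply pd_uniq. apply dpl_mult; auto.
Qed.
Lemma pd_const d c : pd d (fun _ _ _ => c) = (fun _ _ _ => 0).
Proof.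
  extensionality a; extensionality b; extensionality e.
  apply pd_uniq. rewrite line_const. apply derivable_pt_lim_const.
Qed.

Fixpoint Sm (n:nat) (g:F3) : Prop :=
  continuous3 g /\ (forall d, has_pd d g) /\
  match n with O => True | S k => forall d, Sm k (pd d g) end.

Lemma Sm_mono n g : Sm (S n) g -> Sm n g.
Proof.
  revert g; induction n; intros g [H1 [H2 H3]]; simpl.
  - tauto.
  - split; [auto|split; [auto|]]. intro d. apply IHn. apply H3.
Qed.

Lemma Sm_plus n : forall g h, Sm n g -> Sm n h -> Sm n (fun a b c => g a b c + h a b c).
Proof.
  induction n; intros g h [G1 [G2 G3]] [H1 [H2 H3]]; simpl.
  - split; [apply c3_plus; auto|split; [intro; apply has_pd_plus; auto|auto]].
  - split; [apply c3_plus; auto|split; [intro; apply has_pd_plus; auto|]].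
    intro d. rewrite pd_plus; auto.
Qed.

Lemma Sm_const n : forall c, Sm n (fun _ _ _ => c).
Proof.
  induction n; intro c; simpl; (split; [apply c3_const|split; [intro; apply has_pd_const|]]); auto.
  intro d. rewrite pd_const. auto.
Qed.

Lemma Sm_mult n : forall g h, Sm n g -> Sm n h -> Sm n (fun a b c => g a b c * h a b c).
Proof.
  induction n; intros g h HG HH; pose proof HG as [G1 [G2 G3]]; pose proof HH as [H1 [H2 H3]]; simpl.
  - split; [apply c3_mult; auto|split; [intro; apply has_pd_mult; auto|auto]].
  - split; [apply c3_mult; auto|split; [intro; apply has_pd_mult; auto|]].
    intro d. rewrite pd_mult; auto.
    apply Sm_plus; apply IHn; auto; apply Sm_mono; auto.
Qed.

Lemma iter_pd_app ds d g : iter_pd ds (pd d g) = iter_pd (ds ++ d :: nil) g.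
Proof. induction ds; simpl; auto. rewrite IHds; auto. Qed.

Lemma smooth_Sm n : forall g, smooth3 g -> Sm n g.
Proof.
  induction n; intros g H; simpl; (split; [apply (H nil)|split; [apply (H nil)|]]); auto.
  intro d. apply IHn. intro ds. rewrite iter_pd_app. apply H.
Qed.

Lemma Sm_iter ds : forall k g, Sm (k + length ds) g -> Sm k (iter_pd ds g).
Proof.
  induction ds as [|d ds IH]; intros k g H; simpl.
  - rewrite Nat.add_0_r in H; auto.
  - simpl in H. rewrite Nat.add_succ_r in H.
    assert (H' := IH (S k) g H). destruct H' as [_ [_ H3]]. apply H3.
Qed.

Lemma Sm_smooth g : (forall n, Sm n g) -> smooth3 g.
Proof.
  intros H ds. assert (A := Sm_iter ds 0 g (H _)). destruct A as [A1 [A2 _]]. auto.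
Qed.

Lemma sm_plus g h : smooth3 g -> smooth3 h -> smooth3 (fun a b c => g a b c + h a b c).
Proof. intros. apply Sm_smooth. intro n. apply Sm_plus; apply smooth_Sm; auto. Qed.
Lemma sm_mult g h : smooth3 g -> smooth3 h -> smooth3 (fun a b c => g a b c * h a b c).
Proof. intros. apply Sm_smooth. intro n. apply Sm_mult; apply smooth_Sm; auto. Qed.
Lemma sm_const c : smooth3 (fun _ _ _ => c).
Proof. apply Sm_smooth. intro n. apply Sm_const. Qed.
Lemma sm_pd d g : smooth3 g -> smooth3 (pd d g).
Proof. intros H ds. rewrite iter_pd_app. apply H. Qed.
Lemma sm_cont g : smooth3 g -> continuous3 g.
Proof. intro H. apply (H nil). Qed.
Lemma sm_has d g : smooth3 g -> has_pd d g.
Proof. intro H. apply (H nil). Qed.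
Lemma sm_ext g h : (forall a b c, g a b c = h a b c) -> smooth3 g -> smooth3 h.
Proof.
  intros E H. replace h with g; auto.
  extensionality a; extensionality b; extensionality c; auto.
Qed.
Lemma sm_opp g : smooth3 g -> smooth3 (fun a b c => - g a b c).
Proof.
  intro H. apply (sm_ext (fun a b c => (fun _ _ _ => -1) a b c * g a b c)).
  intros; ring. apply sm_mult; auto. apply sm_const.
Qed.
Lemma sm_minus g h : smooth3 g -> smooth3 h -> smooth3 (fun a b c => g a b c - h a b c).
Proof.
  intros. apply (sm_ext (fun a b c => g a b c + (fun a b c => - h a b c) a b c)).
  intros; ring. apply sm_plus; auto. apply sm_opp; auto.
Qed.

Lemma exR (f : R -> R) a b : (forall z, continuous f z) -> ex_RInt f a b.
Proof. intro H. apply (ex_RInt_continuous (V:=R_CompleteNormedModule)). intros; apply H. Qed.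

Lemma RIntR_minus (f g : R -> R) a b : ex_RInt f a b -> ex_RInt g a b ->
  RInt (fun x => f x - g x) a b = RInt f a b - RInt g a b.
Proof. intros. exact (RInt_minus f g a b H H0). Qed.
Lemma RIntR_plus (f g : R -> R) a b : ex_RInt f a b -> ex_RInt g a b ->
  RInt (fun x => f x + g x) a b = RInt f a b + RInt g a b.
Proof. intros. exact (RInt_plus f g a b H H0). Qed.
Lemma RIntR_scal (f : R -> R) a b c : ex_RInt f a b ->
  RInt (fun x => c * f x) a b = c * RInt f a b.
Proof. intros. exact (RInt_scal f a b c H). Qed.
Lemma RIntR_opp (f : R -> R) a b : ex_RInt f a b ->
  RInt (fun x => - f x) a b = - RInt f a b.
Proof. intros. exact (RInt_opp f a b H). Qed.
Lemma RIntR_swap (f : R -> R) a b : ex_RInt f a b -> RInt f b a = - RInt f a b.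
Proof. intros. symmetry. exact (opp_RInt_swap f a b H). Qed.
Lemma RIntR_Chasles (f : R -> R) a b c : ex_RInt f a b -> ex_RInt f b c ->
  RInt f a b + RInt f b c = RInt f a c.
Proof. intros. exact (RInt_Chasles f a b c H H0). Qed.
Lemma exR_minus (f g : R -> R) a b : ex_RInt f a b -> ex_RInt g a b ->
  ex_RInt (fun x => f x - g x) a b.
Proof. intros. exact (ex_RInt_minus f g a b H H0). Qed.
Lemma exR_plus (f g : R -> R) a b : ex_RInt f a b -> ex_RInt g a b ->
  ex_RInt (fun x => f x + g x) a b.
Proof. intros. exact (ex_RInt_plus f g a b H H0). Qed.

Lemma RIntR_bound (f : R -> R) a b M :
  (forall t, Rmin a b <= t <= Rmax a b -> Rabs (f t) <= M) -> ex_RInt f a b ->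
  Rabs (RInt f a b) <= M * Rabs (b - a).
Proof.
  intros H Hex. destruct (Rle_dec a b) as [Hab|Hab].
  - rewrite Rmin_left, Rmax_right in H by lra.
    rewrite (Rabs_right (b - a)) by lra.
    rewrite Rmult_comm. apply abs_RInt_le_const; auto.
  - rewrite Rmin_right, Rmax_left in H by lra.
    rewrite <- (Ropp_involutive (RInt f a b)).
    rewrite <- RIntR_swap by auto. rewrite Rabs_Ropp.
    rewrite Rabs_minus_sym. rewrite (Rabs_right (a - b)) by lra.
    rewrite Rmult_comm. apply abs_RInt_le_const; auto. lra.
    apply ex_RInt_swap; auto.
Qed.

Lemma abs_tri3 a b c e : Rabs (a - c) < e/2 -> Rabs (b - c) < e/2 -> Rabs (a - b) < e.
Proof.
  intros H1 H2. apply Rabs_def2 in H1; apply Rabs_def2 in H2. apply Rabs_def1; lra.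
Qed.

Lemma c3_slice k s y1 z : continuous3 k -> continuous (k s y1) z.
Proof.
  intro H. apply continuity_pt_filterlim. intros e He.
  destruct (H s y1 z e He) as [d [Hd Hk]]. exists d; split; auto.
  intros x [_ Hx]. simpl in *. unfold R_dist in *. apply Hk; auto.
  rewrite Rminus_diag, Rabs_R0; auto. rewrite Rminus_diag, Rabs_R0; auto.
Qed.

Lemma c3_2d_12 k s y1 y2 : continuous3 k -> continuity_2d_pt (k s) y1 y2.
Proof.
  intros H e. destruct (H s y1 y2 e (cond_pos e)) as [d [Hd Hk]].
  exists (mkposreal d Hd). intros u v Hu Hv. simpl in *. apply Hk; auto.
  rewrite Rminus_diag, Rabs_R0; auto.
Qed.
Lemma c3_2d_02 k s y1 y2 : continuous3 k -> continuity_2d_pt (fun a c => k a y1 c) s y2.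
Proof.
  intros H e. destruct (H s y1 y2 e (cond_pos e)) as [d [Hd Hk]].
  exists (mkposreal d Hd). intros u v Hu Hv. simpl in *. apply Hk; auto.
  rewrite Rminus_diag, Rabs_R0; auto.
Qed.
Lemma c3_2d_01 k s y1 y2 : continuous3 k -> continuity_2d_pt (fun a b => k a b y2) s y1.
Proof.
  intros H e. destruct (H s y1 y2 e (cond_pos e)) as [d [Hd Hk]].
  exists (mkposreal d Hd). intros u v Hu Hv. simpl in *. apply Hk; auto.
  rewrite Rminus_diag, Rabs_R0; auto.
Qed.
Lemma c2_c3 (h : R -> R -> R) : (forall x y, continuity_2d_pt h x y) ->
  continuous3 (fun _ y1 y2 => h y1 y2).
Proof.
  intros H x0 x1 x2 e He. destruct (H x1 x2 (mkposreal e He)) as [d Hd].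
  exists d; split. apply cond_pos. intros. apply Hd; auto.
Qed.
Lemma c2_slice (h : R -> R -> R) x y : continuity_2d_pt h x y -> continuous (h x) y.
Proof.
  intro H. apply continuity_pt_filterlim. intros e He.
  destruct (H (mkposreal e He)) as [d Hd]. exists d; split. apply cond_pos.
  intros z [_ Hz]. simpl in *. unfold R_dist in *. apply Hd; auto.
  rewrite Rminus_diag, Rabs_R0; apply cond_pos.
Qed.
Lemma c2_slice1 (h : R -> R -> R) x y : continuity_2d_pt h x y -> continuous (fun u => h u y) x.
Proof.
  intro H. apply continuity_pt_filterlim. intros e He.
  destruct (H (mkposreal e He)) as [d Hd]. exists d; split. apply cond_pos.
  intros z [_ Hz]. simpl in *. unfold R_dist in *. apply Hd; auto.
  rewrite Rminus_diag, Rabs_R0; apply cond_pos.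
Qed.

Lemma UCy k s0 y0 a b eps : continuous3 k -> 0 < eps ->
  exists d, 0 < d /\ forall s y1 y2, Rabs (s - s0) < d -> Rabs (y1 - y0) < d ->
    a <= y2 <= b -> Rabs (k s y1 y2 - k s0 y0 y2) < eps.
Proof.
  intros Hk He.
  assert (Hc : forall t, {del : posreal | forall s y1 y2, Rabs (s - s0) < del ->
     Rabs (y1 - y0) < del -> Rabs (y2 - t) < del -> Rabs (k s y1 y2 - k s0 y0 t) < eps/2}).
  { intro t. apply constructive_indefinite_description.
    destruct (Hk s0 y0 t (eps/2)) as [del [Hd H]]. lra.
    exists (mkposreal del Hd). simpl. intros; apply H; auto. }
  destruct (compactness_value_1d a b (fun t => proj1_sig (Hc t))) as [d Hd].
  exists d. split. apply cond_pos. intros s y1 y2 Hs Hy Hy2.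
  apply NNPP. intro Hn. apply (Hd y2 Hy2). intros [t [Ht [Hxt Hdt]]]. apply Hn.
  destruct (Hc t) as [del Hdel]. simpl in *.
  apply abs_tri3 with (k s0 y0 t).
  - apply Hdel; lra.
  - apply Hdel; try lra. rewrite Rminus_diag, Rabs_R0; apply cond_pos.
    rewrite Rminus_diag, Rabs_R0; apply cond_pos.
Qed.

Definition sg (Rad y : R) := sqrt (Rad ^ 2 - y ^ 2).
Definition CI Rad (h : R -> R -> R) y1 : R := RInt (h y1) (- sg Rad y1) (sg Rad y1).
Definition DI Rad (h : R -> R -> R) : R := RInt (CI Rad h) (- Rad) Rad.

Lemma sg_nonneg Rad y : 0 <= sg Rad y.
Proof. apply sqrt_pos. Qed.
Lemma sg_le Rad y : 0 < Rad -> sg Rad y <= Rad.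
Proof.
  intro H. unfold sg. rewrite <- (sqrt_pow2 Rad) at 2 by lra.
  apply sqrt_le_1_alt. assert (0 <= y ^ 2) by (apply pow2_ge_0). lra.
Qed.
Lemma sg_cont Rad y : continuous (sg Rad) y.
Proof.
  unfold sg. apply continuous_sqrt_comp.
  apply continuity_pt_filterlim. apply continuity_pt_minus.
  apply continuity_pt_const. intros a b; auto.
  all: apply derivable_continuous_pt; apply derivable_pt_pow; apply derivable_pt_id.
Qed.

Lemma cont_ed f x : continuous f x -> forall e, 0 < e -> exists d, 0 < d /\
  forall y, Rabs (y - x) < d -> Rabs (f y - f x) < e.
Proof.
  intros H e He. apply continuity_pt_filterlim in H.
  destruct (H e He) as [d [Hd Hy]]. exists d; split; auto.
  intros y Hy'. destruct (Req_dec y x) as [->|Hne].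
  rewrite Rminus_diag, Rabs_R0; auto.
  apply (Hy y); split; auto. unfold D_x, no_cond; split; auto.
Qed.

Lemma PJ Rad k s0 y0 : 0 < Rad -> continuous3 k ->
  continuity_2d_pt (fun s y1 => CI Rad (k s) y1) s0 y0.
Proof.
  intros HR Hk eps.
  set (g0 := k s0 y0).
  assert (Hg0 : forall z, continuous g0 z) by (intro; apply c3_slice; auto).
  destruct (continuity_ab_maj (fun t => Rabs (g0 t)) (- Rad) Rad) as [Mx [HMx _]]. lra.
  { intros c _. apply continuity_pt_filterlim.
    apply (continuous_comp g0 Rabs). apply Hg0. apply continuous_Rabs. }
  set (M := Rabs (g0 Mx) + 1).
  assert (HM : 0 < M) by (unfold M; pose proof (Rabs_pos (g0 Mx)); lra).
  assert (HMb : forall t, - Rad <= t <= Rad -> Rabs (g0 t) <= M).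
  { intros t Ht. specialize (HMx t Ht). unfold M; lra. }
  destruct (UCy k s0 y0 (- Rad) Rad (eps / (4 * (Rad + 1))) Hk) as [d1 [Hd1 Hu]].
  { apply Rdiv_lt_0_compat. apply cond_pos. lra. }
  destruct (cont_ed (sg Rad) y0 (sg_cont Rad y0) (eps / (4 * M))) as [d2 [Hd2 Hs]].
  { apply Rdiv_lt_0_compat. apply cond_pos. lra. }
  assert (Hd : 0 < Rmin d1 d2) by (apply Rmin_pos; auto).
  exists (mkposreal _ Hd). intros s y1 Hs1 Hy1. simpl in Hs1, Hy1.
  assert (Hs1' : Rabs (s - s0) < d1) by (eapply Rlt_le_trans; [exact Hs1|apply Rmin_l]).
  assert (Hy1' : Rabs (y1 - y0) < d1) by (eapply Rlt_le_trans; [exact Hy1|apply Rmin_l]).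
  assert (Hy2' : Rabs (y1 - y0) < d2) by (eapply Rlt_le_trans; [exact Hy1|apply Rmin_r]).
  specialize (Hs y1 Hy2').
  unfold CI. fold g0.
  set (a1 := sg Rad y1). set (a0 := sg Rad y0). fold a1 a0 in Hs.
  assert (Ha1 : 0 <= a1 <= Rad) by (split; [apply sg_nonneg|apply sg_le; auto]).
  assert (Ha0 : 0 <= a0 <= Rad) by (split; [apply sg_nonneg|apply sg_le; auto]).
  assert (Ex1 : forall a b, ex_RInt (k s y1) a b) by (intros; apply exR; intro; apply c3_slice; auto).
  assert (Ex0 : forall a b, ex_RInt g0 a b) by (intros; apply exR; auto).
  assert (E1 : RInt (k s y1) (-a1) a1 - RInt g0 (-a0) a0 =
     RInt (fun t => k s y1 t - g0 t) (-a1) a1 + (RInt g0 (-a1) (-a0) + RInt g0 a0 a1)).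
  { rewrite RIntR_minus by auto.
    rewrite <- (RIntR_Chasles g0 (-a1) (-a0) a1) by auto.
    rewrite <- (RIntR_Chasles g0 (-a0) a0 a1) by auto. ring. }
  rewrite E1.
  assert (B1 : Rabs (RInt (fun t => k s y1 t - g0 t) (-a1) a1) <= eps / (4 * (Rad + 1)) * Rabs (a1 - - a1)).
  { apply RIntR_bound. intros t Ht. left. unfold g0. apply Hu; auto.
    assert (Rmin (-a1) a1 = -a1) by (apply Rmin_left; lra).
    assert (Rmax (-a1) a1 = a1) by (apply Rmax_right; lra). lra.
    apply exR_minus; auto. }
  assert (B2 : Rabs (RInt g0 (-a1) (-a0)) <= M * Rabs (- a0 - - a1)).
  { apply RIntR_bound; auto. intros t Ht. apply HMb.
    split; [eapply Rle_trans; [|apply Ht]|eapply Rle_trans; [apply Ht|]];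
    [apply Rmin_glb|apply Rmax_lub]; lra. }
  assert (B3 : Rabs (RInt g0 a0 a1) <= M * Rabs (a1 - a0)).
  { apply RIntR_bound; auto. intros t Ht. apply HMb.
    split; [eapply Rle_trans; [|apply Ht]|eapply Rle_trans; [apply Ht|]];
    [apply Rmin_glb|apply Rmax_lub]; lra. }
  replace (- a0 - - a1) with (a1 - a0) in B2 by ring.
  assert (Hlin : M * Rabs (a1 - a0) <= M * (eps / (4 * M))).
  { apply Rmult_le_compat_l; lra. }
  replace (M * (eps / (4 * M))) with (eps / 4) in Hlin by (field; lra).
  rewrite Rabs_right with (r := a1 - - a1) in B1 by lra.
  assert (Hl2 : eps / (4 * (Rad + 1)) * (a1 - - a1) <= eps / (4 * (Rad + 1)) * (2 * Rad)).
  { apply Rmult_le_compat_l. left. apply Rdiv_lt_0_compat. apply cond_pos. lra. lra. }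
  assert (Hl3 : eps / (4 * (Rad + 1)) * (2 * Rad) < eps / 2).
  { pose proof (cond_pos eps). apply Rlt_le_trans with (eps / (4 * (Rad + 1)) * (2 * (Rad + 1))).
    apply Rmult_lt_compat_l. apply Rdiv_lt_0_compat; lra. lra. right; field; lra. }
  eapply Rle_lt_trans. apply Rabs_triang.
  eapply Rle_lt_trans. apply Rplus_le_compat_l. apply Rabs_triang.
  lra.
Qed.

Lemma c2_swap (h : R -> R -> R) x y : continuity_2d_pt h x y -> continuity_2d_pt (fun a b => h b a) y x.
Proof. intros H e. destruct (H e) as [d Hd]. exists d. intros. apply Hd; auto. Qed.

Lemma PO (J : R -> R -> R) a b s0 : a <= b -> (forall s y, continuity_2d_pt J s y) ->
  continuous (fun s => RInt (J s) a b) s0.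
Proof.
  intros Hab HJ. apply continuity_pt_filterlim. intros e He.
  destruct (uniform_continuity_2d_1d (fun y1 s => J s y1) a b s0) with (eps := mkposreal (e / (b - a + 1)) ltac:(apply Rdiv_lt_0_compat; lra)) as [del Hdel].
  { intros x _. apply c2_swap. auto. }
  exists del. split. apply cond_pos. intros s [_ Hs]. simpl in Hs. unfold R_dist in *. simpl.
  assert (Ex : forall s', ex_RInt (J s') a b) by (intro; apply exR; intro; apply c2_slice; auto).
  unfold Rdist. rewrite <- RIntR_minus by auto.
  eapply Rle_lt_trans. apply RIntR_bound with (M := e / (b - a + 1)).
  { intros t Ht. rewrite Rmin_left, Rmax_right in Ht by lra. left.
    apply (Hdel t s0 t s); auto; try (split; pose proof (cond_pos del); lra).
    split; apply Rabs_def2 in Hs; lra. rewrite Rminus_diag, Rabs_R0; apply cond_pos. }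
  apply exR_minus; auto.
  rewrite Rabs_right by lra.
  apply Rlt_le_trans with (e / (b - a + 1) * (b - a + 1)).
  apply Rmult_lt_compat_l. apply Rdiv_lt_0_compat; lra. lra. right; field; lra.
Qed.

Lemma DI_cont Rad k s0 : 0 < Rad -> continuous3 k -> continuous (fun s => DI Rad (k s)) s0.
Proof.
  intros HR Hk. unfold DI. apply (PO (fun s y1 => CI Rad (k s) y1)). lra.
  intros; apply PJ; auto.
Qed.

Lemma CI_ex Rad k s a b : 0 < Rad -> continuous3 k -> ex_RInt (CI Rad (k s)) a b.
Proof.
  intros HR Hk. apply exR. intro z.
  apply (c2_slice (fun s y1 => CI Rad (k s) y1)). apply PJ; auto.
Qed.

Definition fgood (Rad Cf : R) (f : R -> R) :=
  (forall x, derivable_pt_lim f x (deriv1 f x)) /\ (forall x, continuity_pt (deriv1 f) x) /\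
  (forall c, 0 <= c <= Rad -> Rabs (deriv1 f c) <= Cf * c ^ 2) /\ 0 <= Cf /\ f Rad = 0.

Definition rr (a b : R) := sqrt (a ^ 2 + b ^ 2).
Definition Gr (f : R -> R) (a b : R) := deriv1 f (rr a b) * b / rr a b.

Lemma rr_sym a b : rr a b = rr b a.
Proof. unfold rr. f_equal. ring. Qed.
Lemma rr_nonneg a b : 0 <= rr a b.
Proof. apply sqrt_pos. Qed.
Lemma abs_le_rr a b : Rabs b <= rr a b.
Proof.
  unfold rr. rewrite <- sqrt_Rsqr_abs. apply sqrt_le_1_alt. unfold Rsqr.
  assert (0 <= a ^ 2) by apply pow2_ge_0. lra.
Qed.
Lemma rr_pos a b : (a <> 0 \/ b <> 0) -> 0 < rr a b.
Proof.
  intro H. unfold rr. apply sqrt_lt_R0.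
  destruct H as [H|H]; [assert (0 < a ^ 2) by (apply pow2_gt_0; auto); assert (0 <= b ^ 2) by apply pow2_ge_0
   |assert (0 < b ^ 2) by (apply pow2_gt_0; auto); assert (0 <= a ^ 2) by apply pow2_ge_0]; lra.
Qed.

Lemma Gr_bound Rad Cf f a b : fgood Rad Cf f -> rr a b <= Rad -> Rabs (Gr f a b) <= Cf * rr a b ^ 2.
Proof.
  intros [_ [_ [Hb [HC _]]]] Hr. unfold Gr.
  destruct (Req_dec (rr a b) 0) as [E|E].
  - rewrite E. unfold Rdiv. rewrite Rinv_0. rewrite Rmult_0_r, Rabs_R0.
    assert (0 <= Cf * 0 ^ 2) by (simpl; lra). auto.
  - assert (Hp : 0 < rr a b) by (pose proof (rr_nonneg a b); lra).
    unfold Rdiv. rewrite !Rabs_mult. rewrite Rabs_inv. rewrite (Rabs_right (rr a b)) by lra.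
    assert (H1 : Rabs b / rr a b <= 1).
    { apply (Rmult_le_reg_r (rr a b)); auto. unfold Rdiv. rewrite Rmult_assoc, Rinv_l by lra.
      pose proof (abs_le_rr a b). lra. }
    assert (H2 := Hb (rr a b) (conj (rr_nonneg a b) Hr)).
    unfold Rdiv in H1. rewrite Rmult_assoc.
    apply Rle_trans with (Rabs (deriv1 f (rr a b)) * 1).
    apply Rmult_le_compat_l; auto. apply Rabs_pos. lra.
Qed.

Lemma fr_deriv2_orig Rad Cf f : 0 < Rad -> fgood Rad Cf f ->
  derivable_pt_lim (fun t => f (rr 0 t)) 0 (Gr f 0 0).
Proof.
  intros HR Hf. pose proof Hf as [Hd [_ [Hb [HC _]]]].
  replace (Gr f 0 0) with 0 by (unfold Gr; unfold Rdiv; ring).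
  intros eps He.
  assert (Hd0 : 0 < Rmin Rad (Rmin 1 (eps / (Cf + 1)))).
  { apply Rmin_pos; auto. apply Rmin_pos. lra. apply Rdiv_lt_0_compat; lra. }
  exists (mkposreal _ Hd0). intros h Hh Hlt. simpl in Hlt.
  assert (Hx1 : Rabs h < Rad) by (eapply Rlt_le_trans; [exact Hlt|apply Rmin_l]).
  assert (Hx2 : Rabs h < 1) by (eapply Rlt_le_trans; [exact Hlt|eapply Rle_trans; [apply Rmin_r|apply Rmin_l]]).
  assert (Hx3 : Rabs h < eps / (Cf + 1)) by (eapply Rlt_le_trans; [exact Hlt|eapply Rle_trans; [apply Rmin_r|apply Rmin_r]]).
  assert (E : forall t, rr 0 t = Rabs t).
  { intro t. unfold rr. rewrite <- sqrt_Rsqr_abs. f_equal. unfold Rsqr; ring. }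
  rewrite Rplus_0_l, !E, Rabs_R0.
  set (x := Rabs h). assert (Hxp : 0 < x) by (apply Rabs_pos_lt; auto).
  destruct (MVT_cor2 f (deriv1 f) 0 x Hxp) as [c [Ec Hc]].
  { intros; apply Hd. }
  rewrite Ec. rewrite !Rminus_0_r.
  assert (X1 : x < Rad) by (unfold x; lra).
  assert (X2 : x < 1) by (unfold x; lra).
  assert (X3 : x < eps / (Cf + 1)) by (unfold x; lra).
  assert (Bc : Rabs (deriv1 f c) <= Cf * c ^ 2) by (apply Hb; lra).
  replace (deriv1 f c * x / h) with (deriv1 f c * (x / h)) by (unfold Rdiv; ring).
  rewrite Rabs_mult. unfold Rdiv. rewrite Rabs_mult, Rabs_inv. fold x.
  rewrite (Rabs_right x) by lra. rewrite Rinv_r by lra. rewrite Rmult_1_r.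
  eapply Rle_lt_trans. apply Bc.
  assert (c * c <= c * 1) by (apply Rmult_le_compat_l; lra).
  assert (c ^ 2 <= x) by (simpl; lra).
  apply Rle_lt_trans with (Cf * x). apply Rmult_le_compat_l; lra.
  apply Rle_lt_trans with (Cf * (eps / (Cf + 1))). apply Rmult_le_compat_l; lra.
  replace (Cf * (eps / (Cf + 1))) with (eps - eps / (Cf+1)) by (field; lra).
  assert (0 < eps/(Cf+1)) by (apply Rdiv_lt_0_compat; lra). lra.
Qed.

Lemma fr_deriv2 Rad Cf f a b : 0 < Rad -> fgood Rad Cf f ->
  derivable_pt_lim (fun t => f (rr a t)) b (Gr f a b).
Proof.
  intros HR Hf. pose proof Hf as [Hd _].
  destruct (Req_dec a 0) as [Ha|Ha]; [destruct (Req_dec b 0) as [Hb|Hb]|].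
  - subst. apply (fr_deriv2_orig Rad Cf); auto.
  - assert (P : 0 < rr a b) by (apply rr_pos; auto).
    assert (P2 : 0 < a ^ 2 + b ^ 2) by (subst; assert (0 < b ^ 2) by (apply pow2_gt_0; auto); lra).
    apply is_derive_Reals.
    assert (D1 : is_derive (fun t => rr a t) b (b / rr a b)).
    { unfold rr in *. auto_derive. all: try (simpl in P2; nra).
      replace (a*(a*1)+b*(b*1)) with (a^2+b^2) by ring. field. lra. }
    assert (D2 := is_derive_comp f (rr a) b _ _ (proj2 (is_derive_Reals _ _ _) (Hd (rr a b))) D1).
    eapply is_derive_ext; [|]. intro; reflexivity.
    replace (Gr f a b) with (scal (b / rr a b) (deriv1 f (rr a b))). exact D2.
    unfold Gr, scal; simpl; unfold mult; simpl. field. lra.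
  - assert (P : 0 < rr a b) by (apply rr_pos; auto).
    assert (P2 : 0 < a ^ 2 + b ^ 2) by (assert (0 < a ^ 2) by (apply pow2_gt_0; auto); assert (0 <= b^2) by apply pow2_ge_0; lra).
    apply is_derive_Reals.
    assert (D1 : is_derive (fun t => rr a t) b (b / rr a b)).
    { unfold rr in *. auto_derive. all: try (simpl in P2; nra).
      replace (a*(a*1)+b*(b*1)) with (a^2+b^2) by ring. field. lra. }
    assert (D2 := is_derive_comp f (rr a) b _ _ (proj2 (is_derive_Reals _ _ _) (Hd (rr a b))) D1).
    replace (Gr f a b) with (scal (b / rr a b) (deriv1 f (rr a b))). exact D2.
    unfold Gr, scal; simpl; unfold mult; simpl. field. lra.
Qed.

Lemma fr_deriv1 Rad Cf f a b : 0 < Rad -> fgood Rad Cf f ->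
  derivable_pt_lim (fun t => f (rr t b)) a (Gr f b a).
Proof.
  intros HR Hf. assert (H := fr_deriv2 Rad Cf f b a HR Hf).
  intros e He. destruct (H e He) as [d Hd]. exists d. intros h Hh Hl.
  rewrite !(rr_sym _ b). apply Hd; auto.
Qed.

Lemma rr_cont x y : continuity_2d_pt rr x y.
Proof.
  unfold rr. apply continuity_1d_2d_pt_comp.
  apply continuity_pt_filterlim. apply continuous_sqrt.
  apply continuity_2d_pt_plus; simpl; apply continuity_2d_pt_mult;
  try apply continuity_2d_pt_mult; try apply continuity_2d_pt_const;
  try apply continuity_2d_pt_id1; try apply continuity_2d_pt_id2.
Qed.

Lemma fr_cont Rad Cf f x y : fgood Rad Cf f -> continuity_2d_pt (fun a b => f (rr a b)) x y.
Proof.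
  intros [Hd _]. apply continuity_1d_2d_pt_comp. apply derivable_continuous_pt.
  exists (deriv1 f (rr x y)). apply Hd. apply rr_cont.
Qed.

Lemma Gr_cont Rad Cf f x y : 0 < Rad -> fgood Rad Cf f -> continuity_2d_pt (Gr f) x y.
Proof.
  intros HR Hf. pose proof Hf as [Hd [Hc [Hb [HC _]]]].
  destruct (Req_dec x 0) as [Hx|Hx]; [destruct (Req_dec y 0) as [Hy|Hy]|].
  - subst. intro eps.
    assert (Hd0 : 0 < Rmin Rad (Rmin 1 (eps / (Cf + 1)))).
    { apply Rmin_pos; auto. apply Rmin_pos. lra. apply Rdiv_lt_0_compat. apply cond_pos. lra. }
    exists (mkposreal (Rmin Rad (Rmin 1 (eps / (Cf + 1))) / 2) ltac:(lra)).
    intros u v Hu Hv. simpl in Hu, Hv. rewrite !Rminus_0_r in Hu, Hv.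
    replace (Gr f 0 0) with 0 by (unfold Gr; unfold Rdiv; ring). rewrite Rminus_0_r.
    set (m := Rmin Rad (Rmin 1 (eps / (Cf + 1)))) in *.
    assert (m1 : m <= Rad) by apply Rmin_l.
    assert (m2 : m <= 1) by (eapply Rle_trans; [apply Rmin_r|apply Rmin_l]).
    assert (m3 : m <= eps / (Cf + 1)) by (eapply Rle_trans; [apply Rmin_r|apply Rmin_r]).
    assert (Hr : rr u v < m).
    { unfold rr. apply Rle_lt_trans with (Rabs u + Rabs v).
      rewrite <- (sqrt_Rsqr (Rabs u + Rabs v)). apply sqrt_le_1_alt. unfold Rsqr.
      rewrite <- (pow2_abs u), <- (pow2_abs v). simpl.
      pose proof (Rabs_pos u); pose proof (Rabs_pos v). nra.
      pose proof (Rabs_pos u); pose proof (Rabs_pos v); lra. lra. }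
    pose proof (rr_nonneg u v).
    eapply Rle_lt_trans. apply (Gr_bound Rad Cf f u v Hf). lra.
    assert (rr u v ^ 2 <= rr u v) by (simpl; nra).
    apply Rle_lt_trans with (Cf * (eps / (Cf + 1))).
    apply Rle_trans with (Cf * rr u v). apply Rmult_le_compat_l; lra. apply Rmult_le_compat_l; lra.
    pose proof (cond_pos eps).
    replace (Cf * (eps / (Cf + 1))) with (eps - eps / (Cf+1)) by (field; lra).
    assert (0 < eps/(Cf+1)) by (apply Rdiv_lt_0_compat; lra). lra.
  - assert (P : 0 < rr x y) by (apply rr_pos; auto).
    unfold Gr, Rdiv. apply continuity_2d_pt_mult. apply continuity_2d_pt_mult.
    apply continuity_1d_2d_pt_comp. apply Hc. apply rr_cont. apply continuity_2d_pt_id2.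
    apply continuity_2d_pt_inv. apply rr_cont. lra.
  - assert (P : 0 < rr x y) by (apply rr_pos; auto).
    unfold Gr, Rdiv. apply continuity_2d_pt_mult. apply continuity_2d_pt_mult.
    apply continuity_1d_2d_pt_comp. apply Hc. apply rr_cont. apply continuity_2d_pt_id2.
    apply continuity_2d_pt_inv. apply rr_cont. lra.
Qed.

Lemma rr_circle Rad a : 0 < Rad -> Rabs a <= Rad -> rr a (sg Rad a) = Rad /\ rr a (- sg Rad a) = Rad.
Proof.
  intros HR Ha. unfold rr, sg.
  assert (Q : 0 <= Rad ^ 2 - a ^ 2).
  { rewrite <- (pow2_abs a). pose proof (Rabs_pos a). simpl. nra. }
  replace ((- sqrt (Rad ^ 2 - a ^ 2)) ^ 2) with (sqrt (Rad ^ 2 - a ^ 2) ^ 2) by ring.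
  rewrite pow2_sqrt by auto.
  replace (a ^ 2 + (Rad ^ 2 - a ^ 2)) with (Rad ^ 2) by ring. rewrite sqrt_pow2 by lra. auto.
Qed.

Definition C2 (h : R -> R -> R) := forall x y, continuity_2d_pt h x y.

Lemma CI_cont2 Rad h y : 0 < Rad -> C2 h -> continuous (CI Rad h) y.
Proof.
  intros HR H. apply (c2_slice (fun (s : R) y1 => CI Rad ((fun _ a b => h a b) s) y1) 0 y).
  apply PJ; auto. apply c2_c3; auto.
Qed.

Lemma C2_slice h a : C2 h -> forall z, continuous (h a) z.
Proof. intros H z. apply c2_slice; auto. Qed.

Lemma C2_plus g h : C2 g -> C2 h -> C2 (fun a b => g a b + h a b).
Proof. intros G H x y. apply continuity_2d_pt_plus; auto. Qed.
Lemma C2_minus g h : C2 g -> C2 h -> C2 (fun a b => g a b - h a b).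
Proof. intros G H x y. apply continuity_2d_pt_minus; auto. Qed.
Lemma C2_mult g h : C2 g -> C2 h -> C2 (fun a b => g a b * h a b).
Proof. intros G H x y. apply continuity_2d_pt_mult; auto. Qed.
Lemma C2_swap h : C2 h -> C2 (fun a b => h b a).
Proof. intros H x y. apply c2_swap. auto. Qed.

Lemma CI_plus Rad g h y : C2 g -> C2 h -> CI Rad (fun a b => g a b + h a b) y = CI Rad g y + CI Rad h y.
Proof. intros G H. unfold CI. apply RIntR_plus; apply exR; apply C2_slice; auto. Qed.
Lemma CI_minus Rad g h y : C2 g -> C2 h -> CI Rad (fun a b => g a b - h a b) y = CI Rad g y - CI Rad h y.
Proof. intros G H. unfold CI. apply RIntR_minus; apply exR; apply C2_slice; auto. Qed.
Lemma CI_scal Rad c h y : C2 h -> CI Rad (fun a b => c * h a b) y = c * CI Rad h y.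
Proof. intros H. unfold CI. apply RIntR_scal; apply exR; apply C2_slice; auto. Qed.

Lemma DI_plus Rad g h : 0 < Rad -> C2 g -> C2 h -> DI Rad (fun a b => g a b + h a b) = DI Rad g + DI Rad h.
Proof.
  intros HR G H. unfold DI.
  rewrite (RInt_ext _ (fun y => CI Rad g y + CI Rad h y)). apply RIntR_plus; apply exR; intro; apply CI_cont2; auto.
  intros; apply CI_plus; auto.
Qed.
Lemma DI_minus Rad g h : 0 < Rad -> C2 g -> C2 h -> DI Rad (fun a b => g a b - h a b) = DI Rad g - DI Rad h.
Proof.
  intros HR G H. unfold DI.
  rewrite (RInt_ext _ (fun y => CI Rad g y - CI Rad h y)). apply RIntR_minus; apply exR; intro; apply CI_cont2; auto.
  intros; apply CI_minus; auto.
Qed.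
Lemma DI_scal Rad c h : 0 < Rad -> C2 h -> DI Rad (fun a b => c * h a b) = c * DI Rad h.
Proof.
  intros HR H. unfold DI.
  rewrite (RInt_ext _ (fun y => c * CI Rad h y)). apply RIntR_scal; apply exR; intro; apply CI_cont2; auto.
  intros; apply CI_scal; auto.
Qed.

Lemma DI_ext_aux Rad g h : (forall a b, g a b = h a b) -> DI Rad g = DI Rad h.
Proof.
  intro E. replace h with g; auto. extensionality a; extensionality b; auto.
Qed.

Lemma RInt_upper_deriv (g : R -> R) a x : (forall z, continuous g z) ->
  is_derive (fun x => RInt g a x) x (g x).
Proof.
  intro H. apply (is_derive_RInt g (fun x => RInt g a x) a x).
  apply filter_forall. intro b0. apply (RInt_correct (V:=R_CompleteNormedModule)). apply exR; auto.
  apply H.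
Qed.

Lemma sg_deriv Rad x : Rabs x < Rad -> is_derive (sg Rad) x (- x / sg Rad x).
Proof.
  intro H. assert (Q : 0 < Rad ^ 2 - x ^ 2).
  { rewrite <- (pow2_abs x). pose proof (Rabs_pos x). simpl. nra. }
  assert (Q2 : 0 < sg Rad x) by (apply sqrt_lt_R0; auto).
  unfold sg in *. auto_derive. simpl in Q. lra.
  replace (Rad * (Rad * 1) + - (x * (x * 1))) with (Rad ^ 2 - x ^ 2) by ring. field. lra.
Qed.

Lemma sg_Rad Rad : 0 < Rad -> sg Rad Rad = 0 /\ sg Rad (- Rad) = 0.
Proof.
  intro. unfold sg. replace (Rad ^ 2 - Rad ^ 2) with 0 by ring.
  replace (Rad ^ 2 - (- Rad) ^ 2) with 0 by ring. rewrite sqrt_0. auto.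
Qed.

Lemma IBP2 Rad Cf f X Xd a : 0 < Rad -> fgood Rad Cf f -> C2 X -> C2 Xd ->
  (forall a b, derivable_pt_lim (fun t => X a t) b (Xd a b)) -> Rabs a <= Rad ->
  CI Rad (fun a b => f (rr a b) * Xd a b) a = - CI Rad (fun a b => Gr f a b * X a b) a.
Proof.
  intros HR Hf HX HXd HD Ha. unfold CI.
  set (s := sg Rad a).
  assert (Hd : forall t, is_derive (fun t => f (rr a t) * X a t) t (Gr f a t * X a t + f (rr a t) * Xd a t)).
  { intro t. apply is_derive_Reals. apply (derivable_pt_lim_mult (fun t => f (rr a t)) (fun t => X a t)).
    apply (fr_deriv2 Rad Cf); auto. auto. }
  assert (HC : forall t, continuous (fun t => Gr f a t * X a t + f (rr a t) * Xd a t) t).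
  { intro t. apply (C2_slice (fun a t => Gr f a t * X a t + f (rr a t) * Xd a t)).
    apply C2_plus; apply C2_mult; auto. intros x y; apply (Gr_cont Rad Cf); auto.
    intros x y; apply (fr_cont Rad Cf); auto. }
  assert (E := is_RInt_derive (V:=R_CompleteNormedModule) _ _ (-s) s (fun x _ => Hd x) (fun x _ => HC x)).
  apply is_RInt_unique in E.
  destruct (rr_circle Rad a HR Ha) as [E1 E2]. fold s in E1, E2.
  pose proof Hf as [_ [_ [_ [_ Hf0]]]].
  simpl in E. unfold minus, plus, opp in E; simpl in E. rewrite E1, E2, Hf0 in E.
  rewrite RIntR_plus in E.
  lra. apply exR. intro. apply (C2_slice (fun a t => Gr f a t * X a t)). apply C2_mult; auto.
  intros x y; apply (Gr_cont Rad Cf); auto.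
  apply exR. intro. apply (C2_slice (fun a t => f (rr a t) * Xd a t)). apply C2_mult; auto.
  intros x y; apply (fr_cont Rad Cf); auto.
Qed.

Lemma DI_IBP1 Rad Cf f Y Yd : 0 < Rad -> fgood Rad Cf f -> C2 Y -> C2 Yd ->
  (forall a b, derivable_pt_lim (fun t => Y t b) a (Yd a b)) ->
  DI Rad (fun a b => f (rr a b) * Yd a b) = - DI Rad (fun a b => Gr f b a * Y a b).
Proof.
  intros HR Hf HY HYd HD.
  assert (CGr : C2 (fun a b => Gr f b a)) by (apply C2_swap; intros x y; apply (Gr_cont Rad Cf); auto).
  assert (CF : C2 (fun a b => f (rr a b))) by (intros x y; apply (fr_cont Rad Cf); auto).
  set (k := fun a b => Gr f b a * Y a b + f (rr a b) * Yd a b).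
  assert (Ck : C2 k) by (apply C2_plus; apply C2_mult; auto).
  set (P := fun a b => f (rr a b) * Y a b).
  assert (CP : C2 P) by (apply C2_mult; auto).
  assert (DP : forall u v, is_derive (fun z => P z v) u (k u v)).
  { intros u v. apply is_derive_Reals.
    apply (derivable_pt_lim_mult (fun z => f (rr z v)) (fun z => Y z v)).
    apply (fr_deriv1 Rad Cf); auto. auto. }
  assert (DP' : forall u v, Derive (fun z => P z v) u = k u v).
  { intros; apply is_derive_unique; auto. }
  pose proof Hf as [_ [_ [_ [_ Hf0]]]].
  set (H := CI Rad P).
  assert (HD' : forall x, Rabs x < Rad -> is_derive H x (CI Rad k x)).
  { intros x Hx.
    assert (Hs := sg_deriv Rad x Hx).
    assert (Hsa := is_derive_opp _ _ _ Hs).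
    assert (Ex : forall y a b, ex_RInt (fun t => P y t) a b) by (intros; apply exR; apply C2_slice; auto).
    assert (E1 : Rabs x <= Rad) by lra.
    destruct (rr_circle Rad x HR E1) as [R1 R2].
    replace (CI Rad k x) with
      (RInt (fun t => Derive (fun u => P u t) x) (- sg Rad x) (sg Rad x) +
       - P x (- sg Rad x) * opp (- x / sg Rad x) + P x (sg Rad x) * (- x / sg Rad x)).
    unfold H, CI.
    apply (is_derive_RInt_param_bound_comp P (fun x => - sg Rad x) (sg Rad) x).
    - apply filter_forall. intro; apply Ex.
    - exists (mkposreal 1 Rlt_0_1). apply filter_forall. intro; apply Ex.
    - exists (mkposreal 1 Rlt_0_1). apply filter_forall. intro; apply Ex.
    - exact Hsa.
    - exact Hs.
    - exists (mkposreal 1 Rlt_0_1). apply filter_forall. intros x0 t _. exists (k x0 t). apply DP.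
    - intros t _. apply (continuity_2d_pt_ext k). intros; rewrite DP'; auto. apply Ck.
    - exists (mkposreal 1 Rlt_0_1). intros u v _ _. apply (continuity_2d_pt_ext k). intros; rewrite DP'; auto. apply Ck.
    - exists (mkposreal 1 Rlt_0_1). intros u v _ _. apply (continuity_2d_pt_ext k). intros; rewrite DP'; auto. apply Ck.
    - apply continuity_pt_filterlim. apply C2_slice; auto.
    - apply continuity_pt_filterlim. apply C2_slice; auto.
    - unfold P at 2 3. rewrite R1, R2, Hf0. unfold CI. rewrite (RInt_ext _ (k x)).
      ring. intros; apply DP'. }
  assert (HC : forall x, continuity_pt H x).
  { intro. apply continuity_pt_filterlim. apply CI_cont2; auto. }
  assert (IC : forall x, continuous (CI Rad k) x) by (intro; apply CI_cont2; auto).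
  set (G := fun x => H x - RInt (CI Rad k) (- Rad) x).
  destruct (MVT_gen G (- Rad) Rad (fun _ => 0)) as [c [_ Hc]].
  - intros x Hx. rewrite Rmin_left, Rmax_right in Hx by lra.
    assert (D1 := HD' x ltac:(apply Rabs_def1; lra)).
    assert (D2 := RInt_upper_deriv (CI Rad k) (- Rad) x IC).
    assert (D3 := is_derive_minus _ _ _ _ _ D1 D2).
    unfold G. replace 0 with (minus (CI Rad k x) (CI Rad k x)). exact D3.
    unfold minus, plus, opp; simpl; ring.
  - intros x _. unfold G. apply continuity_pt_minus. auto.
    apply continuity_pt_filterlim. apply (ex_derive_continuous (fun x => RInt (CI Rad k) (-Rad) x)).
    exists (CI Rad k x). apply RInt_upper_deriv; auto.
  - assert (Z : DI Rad k = 0).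
    { unfold G in Hc. unfold H, CI in Hc. destruct (sg_Rad Rad HR) as [S1 S2].
      rewrite S1, S2, Ropp_0 in Hc. rewrite !RInt_point in Hc. simpl in Hc.
      unfold zero in Hc; simpl in Hc. unfold DI, CI. lra. }
    unfold k in Z. rewrite DI_plus in Z; auto; try (apply C2_mult; auto). lra.
Qed.

Lemma spatial Rad Cf f X1 X2 X1d2 X2d1 : 0 < Rad -> fgood Rad Cf f ->
  C2 X1 -> C2 X2 -> C2 X1d2 -> C2 X2d1 ->
  (forall a b, derivable_pt_lim (fun t => X1 a t) b (X1d2 a b)) ->
  (forall a b, derivable_pt_lim (fun t => X2 t b) a (X2d1 a b)) ->
  DI Rad (fun a b => f (rr a b) * (X2d1 a b - X1d2 a b)) =
  DI Rad (fun a b => Gr f a b * X1 a b - Gr f b a * X2 a b).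
Proof.
  intros HR Hf C1 C2' C3 C4 D1 D2.
  assert (CGr : C2 (fun a b => Gr f b a)) by (apply C2_swap; intros x y; apply (Gr_cont Rad Cf); auto).
  assert (CGr' : C2 (Gr f)) by (intros x y; apply (Gr_cont Rad Cf); auto).
  assert (CF : C2 (fun a b => f (rr a b))) by (intros x y; apply (fr_cont Rad Cf); auto).
  rewrite (DI_ext_aux Rad (fun a b => f (rr a b) * (X2d1 a b - X1d2 a b))
     (fun a b => f (rr a b) * X2d1 a b - f (rr a b) * X1d2 a b)) by (intros; ring).
  rewrite DI_minus by (auto; apply C2_mult; auto).
  rewrite DI_minus by (auto; apply C2_mult; auto).
  rewrite (DI_IBP1 Rad Cf f X2 X2d1) by auto.
  assert (E : DI Rad (fun a b => f (rr a b) * X1d2 a b) = - DI Rad (fun a b => Gr f a b * X1 a b)).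
  { unfold DI. rewrite <- RIntR_opp. apply RInt_ext. intros x Hx.
    rewrite Rmin_left, Rmax_right in Hx by lra.
    apply (IBP2 Rad Cf); auto. apply Rabs_le; lra.
    apply exR. intro; apply CI_cont2; auto. apply C2_mult; auto. }
  rewrite E. ring.
Qed.

Lemma CI_deriv_s Rad k kd u t : 0 < Rad -> continuous3 k -> continuous3 kd ->
  (forall s a b, derivable_pt_lim (fun z => k z a b) s (kd s a b)) ->
  is_derive (fun z => CI Rad (k z) t) u (CI Rad (kd u) t).
Proof.
  intros HR Hk Hkd HD. unfold CI.
  assert (DE : forall z v, Derive (fun w => k w t v) z = kd z t v).
  { intros. apply is_derive_unique. apply is_derive_Reals. auto. }
  rewrite <- (RInt_ext (fun y2 => Derive (fun w => k w t y2) u)) by (intros; apply DE).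
  apply (is_derive_RInt_param (fun z y2 => k z t y2)).
  - apply filter_forall. intros x0 y2 _. exists (kd x0 t y2). apply is_derive_Reals. auto.
  - intros y2 _. apply (continuity_2d_pt_ext (fun z v => kd z t v)). intros; rewrite DE; auto.
    apply c3_2d_02; auto.
  - apply filter_forall. intro y. apply exR. intro; apply c3_slice; auto.
Qed.

Lemma DI_deriv_s Rad k kd s : 0 < Rad -> continuous3 k -> continuous3 kd ->
  (forall s a b, derivable_pt_lim (fun z => k z a b) s (kd s a b)) ->
  is_derive (fun z => DI Rad (k z)) s (DI Rad (kd s)).
Proof.
  intros HR Hk Hkd HD. unfold DI.
  assert (DE : forall z v, Derive (fun w => CI Rad (k w) v) z = CI Rad (kd z) v).
  { intros. apply is_derive_unique. apply CI_deriv_s; auto. }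
  rewrite <- (RInt_ext (fun y1 => Derive (fun w => CI Rad (k w) y1) s)) by (intros; apply DE).
  apply (is_derive_RInt_param (fun z y1 => CI Rad (k z) y1)).
  - apply filter_forall. intros x0 y1 _. exists (CI Rad (kd x0) y1). apply CI_deriv_s; auto.
  - intros y1 _. apply (continuity_2d_pt_ext (fun z v => CI Rad (kd z) v)). intros; rewrite DE; auto.
    apply PJ; auto.
  - apply filter_forall. intro y. apply CI_ex; auto.
Qed.

Lemma DI_FTC Rad k kd t : 0 < Rad -> continuous3 k -> continuous3 kd ->
  (forall s a b, derivable_pt_lim (fun z => k z a b) s (kd s a b)) ->
  DI Rad (k t) - DI Rad (k 0) = RInt (fun s => DI Rad (kd s)) 0 t.
Proof.
  intros HR Hk Hkd HD. symmetry.
  apply is_RInt_unique.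
  apply (is_RInt_derive (V:=R_CompleteNormedModule) (fun z => DI Rad (k z)) (fun s => DI Rad (kd s))).
  - intros; apply DI_deriv_s; auto.
  - intros; apply DI_cont; auto.
Qed.

Lemma pd_plus_pt d g h y0 y1 y2 : has_pd d g -> has_pd d h ->
  pd d (fun a b c => g a b c + h a b c) y0 y1 y2 = pd d g y0 y1 y2 + pd d h y0 y1 y2.
Proof. intros. apply pd_uniq. apply dpl_plus; auto. Qed.
Lemma pd_mult_pt d g h y0 y1 y2 : has_pd d g -> has_pd d h ->
  pd d (fun a b c => g a b c * h a b c) y0 y1 y2 =
  pd d g y0 y1 y2 * h y0 y1 y2 + g y0 y1 y2 * pd d h y0 y1 y2.
Proof. intros. apply pd_uniq. apply dpl_mult; auto. Qed.
Lemma pd_const_pt d c y0 y1 y2 : pd d (fun _ _ _ => c) y0 y1 y2 = 0.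
Proof. rewrite pd_const. auto. Qed.
Lemma pd_opp_pt d g y0 y1 y2 : has_pd d g ->
  pd d (fun a b c => - g a b c) y0 y1 y2 = - pd d g y0 y1 y2.
Proof.
  intros. apply pd_uniq. assert (E := dpl_mult d (fun _ _ _ => -1) g y0 y1 y2 (has_pd_const d (-1)) H).
  rewrite pd_const_pt in E.
  replace (line d (fun a b c => - g a b c) y0 y1 y2) with (line d (fun a b c => -1 * g a b c) y0 y1 y2).
  replace (- pd d g y0 y1 y2) with (0 * g y0 y1 y2 + -1 * pd d g y0 y1 y2) by ring. exact E.
  destruct d; simpl; extensionality z; ring.
Qed.
Lemma has_pd_opp d g : has_pd d g -> has_pd d (fun a b c => - g a b c).
Proof.
  intro H. replace (fun a b c => - g a b c) with (fun a b c => (fun _ _ _ => -1) a b c * g a b c).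
  apply has_pd_mult; auto. apply has_pd_const.
  extensionality a; extensionality b; extensionality c; ring.
Qed.
Lemma pd_minus_pt d g h y0 y1 y2 : has_pd d g -> has_pd d h ->
  pd d (fun a b c => g a b c - h a b c) y0 y1 y2 = pd d g y0 y1 y2 - pd d h y0 y1 y2.
Proof.
  intros. unfold Rminus. rewrite pd_plus_pt; auto. rewrite pd_opp_pt; auto.
  apply has_pd_opp; auto.
Qed.

Lemma schwarz2 (h h1 h2 h12 h21 : R -> R -> R) :
  (forall x y, is_derive (fun z => h z y) x (h1 x y)) ->
  (forall x y, is_derive (fun z => h x z) y (h2 x y)) ->
  (forall x y, is_derive (fun z => h2 z y) x (h21 x y)) ->
  (forall x y, is_derive (fun z => h1 x z) y (h12 x y)) ->
  C2 h21 -> C2 h12 -> forall x y, h21 x y = h12 x y.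
Proof.
  intros D1 D2 D21 D12 C21 C12 x y.
  assert (E2 : forall z w, Derive (fun t => h z t) w = h2 z w) by (intros; apply is_derive_unique; auto).
  assert (E1 : forall z w, Derive (fun t => h t w) z = h1 z w) by (intros; apply is_derive_unique; auto).
  assert (F2 : forall w, (fun z => Derive (fun t => h z t) w) = (fun z => h2 z w)) by (intros; extensionality z; auto).
  assert (F1 : forall w, (fun z => Derive (fun t => h t z) w) = (fun z => h1 w z)) by (intros; extensionality z; auto).
  rewrite <- (is_derive_unique _ _ _ (D21 x y)), <- (is_derive_unique _ _ _ (D12 x y)).
  rewrite <- F2, <- F1. apply Schwarz.
  - exists (mkposreal 1 Rlt_0_1). intros u v _ _. rewrite F2, F1.
    repeat split; eexists; eauto.
  - apply (continuity_2d_pt_ext h21). intros u v. rewrite F2. symmetry; apply is_derive_unique; auto. auto.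
  - apply (continuity_2d_pt_ext h12). intros u v. rewrite F1. symmetry; apply is_derive_unique; auto. auto.
Qed.

Lemma pdis d g y0 y1 y2 : has_pd d g ->
  is_derive (line d g y0 y1 y2) (crd d y0 y1 y2) (pd d g y0 y1 y2).
Proof. intro. apply is_derive_Reals. apply pd_spec; auto. Qed.

Lemma pd_comm01 g y0 y1 y2 : smooth3 g -> pd d0 (pd d1 g) y0 y1 y2 = pd d1 (pd d0 g) y0 y1 y2.
Proof.
  intro H.
  apply (schwarz2 (fun x y => g x y y2) (fun x y => pd d0 g x y y2) (fun x y => pd d1 g x y y2)
    (fun x y => pd d1 (pd d0 g) x y y2) (fun x y => pd d0 (pd d1 g) x y y2)).
  - intros x y. apply (pdis d0 g x y y2). apply sm_has; auto.
  - intros x y. apply (pdis d1 g x y y2). apply sm_has; auto.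
  - intros x y. apply (pdis d0 (pd d1 g) x y y2). apply sm_has; apply sm_pd; auto.
  - intros x y. apply (pdis d1 (pd d0 g) x y y2). apply sm_has; apply sm_pd; auto.
  - intros x y. apply c3_2d_01. apply sm_cont. repeat apply sm_pd; auto.
  - intros x y. apply c3_2d_01. apply sm_cont. repeat apply sm_pd; auto.
Qed.
Lemma pd_comm02 g y0 y1 y2 : smooth3 g -> pd d0 (pd d2 g) y0 y1 y2 = pd d2 (pd d0 g) y0 y1 y2.
Proof.
  intro H.
  apply (schwarz2 (fun x y => g x y1 y) (fun x y => pd d0 g x y1 y) (fun x y => pd d2 g x y1 y)
    (fun x y => pd d2 (pd d0 g) x y1 y) (fun x y => pd d0 (pd d2 g) x y1 y)).
  - intros x y. apply (pdis d0 g x y1 y). apply sm_has; auto.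
  - intros x y. apply (pdis d2 g x y1 y). apply sm_has; auto.
  - intros x y. apply (pdis d0 (pd d2 g) x y1 y). apply sm_has; apply sm_pd; auto.
  - intros x y. apply (pdis d2 (pd d0 g) x y1 y). apply sm_has; apply sm_pd; auto.
  - intros x y. apply c3_2d_02. apply sm_cont. repeat apply sm_pd; auto.
  - intros x y. apply c3_2d_02. apply sm_cont. repeat apply sm_pd; auto.
Qed.
Lemma pd_comm12 g y0 y1 y2 : smooth3 g -> pd d1 (pd d2 g) y0 y1 y2 = pd d2 (pd d1 g) y0 y1 y2.
Proof.
  intro H.
  apply (schwarz2 (fun x y => g y0 x y) (fun x y => pd d1 g y0 x y) (fun x y => pd d2 g y0 x y)
    (fun x y => pd d2 (pd d1 g) y0 x y) (fun x y => pd d1 (pd d2 g) y0 x y)).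
  - intros x y. apply (pdis d1 g y0 x y). apply sm_has; auto.
  - intros x y. apply (pdis d2 g y0 x y). apply sm_has; auto.
  - intros x y. apply (pdis d1 (pd d2 g) y0 x y). apply sm_has; apply sm_pd; auto.
  - intros x y. apply (pdis d2 (pd d1 g) y0 x y). apply sm_has; apply sm_pd; auto.
  - intros x y. apply c3_2d_12. apply sm_cont. repeat apply sm_pd; auto.
  - intros x y. apply c3_2d_12. apply sm_cont. repeat apply sm_pd; auto.
Qed.

Lemma pd_comm a b g y0 y1 y2 : smooth3 g -> pd a (pd b g) y0 y1 y2 = pd b (pd a g) y0 y1 y2.
Proof.
  intro H. destruct a, b; auto; try apply pd_comm01; try apply pd_comm02; try apply pd_comm12; auto;
  symmetry; try apply pd_comm01; try apply pd_comm02; try apply pd_comm12; auto.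
Qed.

Ltac smt := repeat (first [assumption | apply sm_const | apply sm_minus | apply sm_plus | apply sm_mult
  | apply sm_opp | apply sm_pd]).

Lemma sm_cA U d : smooth_config U -> smooth3 (cA U d).
Proof. intros [H1 [H2 [H3 [H4 H5]]]]. destruct d; simpl; auto. Qed.

Lemma sm_jc U d : smooth_config U -> smooth3 (jc U d).
Proof.
  intro H. pose proof H as [Hu [Hv _]]. pose proof (sm_cA U d H).
  unfold jc, Dre, Dim. smt.
Qed.

Definition Xk (U : config) (d : dir) : F3 :=
  fun s a b => pd d0 (jc U d) s a b - pd d (jc U d0) s a b + Fc U d0 d s a b.

Lemma X_alg U d s a b : smooth_config U ->
  Xk U d s a b = 2 * (Dre U d0 s a b * Dim U d s a b - Dim U d0 s a b * Dre U d s a b)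
     + (1 - phisq U s a b) * Fc U d0 d s a b.
Proof.
  intro H. pose proof H as [Hu [Hv _]]. pose proof (sm_cA U d H). pose proof (sm_cA U d0 H).
  unfold Xk, jc, Dre, Dim.
  repeat first [rewrite pd_plus_pt by (apply sm_has; smt) | rewrite pd_minus_pt by (apply sm_has; smt)
    | rewrite pd_mult_pt by (apply sm_has; smt) | rewrite pd_opp_pt by (apply sm_has; smt)].
  rewrite (pd_comm d d0 (cu U)) by auto. rewrite (pd_comm d d0 (cv U)) by auto.
  unfold phisq, Fc. ring.
Qed.

Lemma sm_X U d : smooth_config U -> smooth3 (Xk U d).
Proof.
  intro H. pose proof (sm_jc U d H). pose proof (sm_jc U d0 H).
  pose proof (sm_cA U d H). pose proof (sm_cA U d0 H).
  unfold Xk, Fc. smt.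
Qed.

Lemma sm_omega U : smooth_config U -> smooth3 (omega U).
Proof.
  intro H. pose proof (sm_jc U d1 H). pose proof (sm_jc U d2 H).
  pose proof (sm_cA U d1 H). pose proof (sm_cA U d2 H).
  unfold omega, Fc. smt.
Qed.

Lemma omega_id U s a b : smooth_config U ->
  2 * pd d0 (omega U) s a b = pd d1 (Xk U d2) s a b - pd d2 (Xk U d1) s a b.
Proof.
  intro H. pose proof (sm_jc U d1 H). pose proof (sm_jc U d2 H). pose proof (sm_jc U d0 H).
  pose proof (sm_cA U d1 H). pose proof (sm_cA U d2 H). pose proof (sm_cA U d0 H).
  unfold omega, Xk, Fc.
  repeat first [rewrite pd_plus_pt by (apply sm_has; smt) | rewrite pd_minus_pt by (apply sm_has; smt)
    | rewrite pd_mult_pt by (apply sm_has; smt) | rewrite pd_opp_pt by (apply sm_has; smt)].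
  rewrite pd_const_pt.
  rewrite (pd_comm d1 d0 (jc U d2)) by auto.
  rewrite (pd_comm d2 d0 (jc U d1)) by auto.
  rewrite (pd_comm d1 d2 (jc U d0)) by auto.
  rewrite (pd_comm d1 d0 (cA U d2)) by auto.
  rewrite (pd_comm d2 d0 (cA U d1)) by auto.
  rewrite (pd_comm d1 d2 (cA U d0)) by auto.
  field.
Qed.

Lemma L1 p q pk qk w : 0 <= w ->
  w * Rabs (2 * (p * qk - q * pk)) <= p^2 + q^2 + w^2 * (pk^2 + qk^2).
Proof.
  intro Hw. rewrite <- (Rabs_right w) at 1 by lra. rewrite <- Rabs_mult.
  apply Rabs_le. split.
  - assert (0 <= (p + w * qk)^2 + (q - w * pk)^2) by (apply Rplus_le_le_0_compat; apply pow2_ge_0). nra.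
  - assert (0 <= (p - w * qk)^2 + (q + w * pk)^2) by (apply Rplus_le_le_0_compat; apply pow2_ge_0). nra.
Qed.

Lemma L2 P F w eps Rad : 0 <= w -> w <= Rad ^ 2 -> 0 < eps ->
  w * Rabs (P * F) <= / 2 * (Rad ^ 2 * (eps ^ 2 * F ^ 2)) + / 2 * (w * (P / eps) ^ 2).
Proof.
  intros Hw HwR He. set (z := P / eps).
  replace P with (z * eps) by (unfold z; field; lra).
  rewrite <- (Rabs_right w) at 1 by lra. rewrite <- Rabs_mult.
  assert (H1 : Rabs (w * (z * eps * F)) <= / 2 * (w * (eps ^ 2 * F ^ 2)) + / 2 * (w * z ^ 2)).
  { apply Rabs_le. split.
    - assert (0 <= w * (z + eps * F) ^ 2) by (apply Rmult_le_pos; [lra|apply pow2_ge_0]). nra.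
    - assert (0 <= w * (z - eps * F) ^ 2) by (apply Rmult_le_pos; [lra|apply pow2_ge_0]). nra. }
  assert (H2 : w * (eps ^ 2 * F ^ 2) <= Rad ^ 2 * (eps ^ 2 * F ^ 2)).
  { apply Rmult_le_compat_r; auto. apply Rmult_le_pos; apply pow2_ge_0. }
  lra.
Qed.

Definition K0 Rad lam := 2 + Rad ^ 2 / 2 + 2 * Rad ^ 2 + 8 / lam.

Lemma alg_bound p q p1 q1 p2 q2 F1 F2 F12 ph w eps lam Rad :
  0 <= w -> w <= Rad ^ 2 -> 0 < eps -> 0 < lam ->
  w * (Rabs (2 * (p * q1 - q * p1) + (1 - ph) * F1) + Rabs (2 * (p * q2 - q * p2) + (1 - ph) * F2))
  <= K0 Rad lam * ((p ^ 2 + q ^ 2) + eps ^ 2 * (F1 ^ 2 + F2 ^ 2) +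
       w * (/ 2 * ((p1 ^ 2 + q1 ^ 2) + (p2 ^ 2 + q2 ^ 2)) + eps ^ 2 / 4 * F12 ^ 2
            + lam / (8 * eps ^ 2) * (ph - 1) ^ 2)).
Proof.
  intros Hw HwR He Hl.
  assert (A1 := L1 p q p1 q1 w Hw). assert (A2 := L1 p q p2 q2 w Hw).
  assert (B1 := L2 (1 - ph) F1 w eps Rad Hw HwR He). assert (B2 := L2 (1 - ph) F2 w eps Rad Hw HwR He).
  assert (T1 := Rabs_triang (2 * (p * q1 - q * p1)) ((1 - ph) * F1)).
  assert (T2 := Rabs_triang (2 * (p * q2 - q * p2)) ((1 - ph) * F2)).
  set (T := ((1 - ph) / eps) ^ 2) in *.
  assert (ET : lam / (8 * eps ^ 2) * (ph - 1) ^ 2 = lam / 8 * T) by (unfold T; field; lra).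
  rewrite ET.
  set (S := (p1 ^ 2 + q1 ^ 2) + (p2 ^ 2 + q2 ^ 2)).
  assert (HS : 0 <= S) by (unfold S; pose proof (pow2_ge_0 p1); pose proof (pow2_ge_0 q1);
     pose proof (pow2_ge_0 p2); pose proof (pow2_ge_0 q2); lra).
  assert (HT : 0 <= T) by (apply pow2_ge_0).
  assert (HZ : 0 <= eps ^ 2 / 4 * F12 ^ 2) by (apply Rmult_le_pos; [apply Rmult_le_pos; [apply pow2_ge_0|lra]|apply pow2_ge_0]).
  set (Z := eps ^ 2 / 4 * F12 ^ 2) in *.
  assert (HP : 0 <= p ^ 2 + q ^ 2) by (pose proof (pow2_ge_0 p); pose proof (pow2_ge_0 q); lra).
  assert (HF : 0 <= eps ^ 2 * (F1 ^ 2 + F2 ^ 2)) by (apply Rmult_le_pos; [apply pow2_ge_0|pose proof (pow2_ge_0 F1); pose proof (pow2_ge_0 F2); lra]).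
  assert (HR2 : 0 <= Rad ^ 2) by apply pow2_ge_0.
  assert (W1 : w ^ 2 * (p1 ^ 2 + q1 ^ 2) + w ^ 2 * (p2 ^ 2 + q2 ^ 2) <= Rad ^ 2 * (w * S)).
  { unfold S. replace (w ^ 2) with (w * w) by ring.
    assert (0 <= p1 ^ 2 + q1 ^ 2) by (pose proof (pow2_ge_0 p1); pose proof (pow2_ge_0 q1); lra).
    assert (0 <= p2 ^ 2 + q2 ^ 2) by (pose proof (pow2_ge_0 p2); pose proof (pow2_ge_0 q2); lra).
    assert (w * w <= Rad ^ 2 * w) by (apply Rmult_le_compat_r; lra). nra. }
  assert (LHS : w * (Rabs (2 * (p * q1 - q * p1) + (1 - ph) * F1) + Rabs (2 * (p * q2 - q * p2) + (1 - ph) * F2))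
     <= 2 * (p ^ 2 + q ^ 2) + Rad ^ 2 * (w * S) + / 2 * Rad ^ 2 * (eps ^ 2 * (F1 ^ 2 + F2 ^ 2)) + w * T).
  { assert (w * Rabs (2 * (p * q1 - q * p1) + (1 - ph) * F1) <= w * Rabs (2 * (p * q1 - q * p1)) + w * Rabs ((1 - ph) * F1))
      by (rewrite <- Rmult_plus_distr_l; apply Rmult_le_compat_l; lra).
    assert (w * Rabs (2 * (p * q2 - q * p2) + (1 - ph) * F2) <= w * Rabs (2 * (p * q2 - q * p2)) + w * Rabs ((1 - ph) * F2))
      by (rewrite <- Rmult_plus_distr_l; apply Rmult_le_compat_l; lra).
    fold T in B1, B2. lra. }
  eapply Rle_trans. apply LHS.
  assert (Hw' : 0 <= w * (/ 2 * S + Z + lam / 8 * T)).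
  { apply Rmult_le_pos; auto. assert (0 <= lam / 8 * T) by (apply Rmult_le_pos; lra). lra. }
  assert (E1 : w * T <= 8 / lam * (w * (/ 2 * S + Z + lam / 8 * T))).
  { replace (8 / lam * (w * (/ 2 * S + Z + lam / 8 * T))) with (8 / lam * (w * (/ 2 * S + Z)) + w * T) by (field; lra).
    assert (0 <= 8 / lam * (w * (/ 2 * S + Z))).
    { apply Rmult_le_pos. apply Rlt_le, Rdiv_lt_0_compat; lra. apply Rmult_le_pos; lra. }
    lra. }
  assert (E2 : Rad ^ 2 * (w * S) <= 2 * Rad ^ 2 * (w * (/ 2 * S + Z + lam / 8 * T))).
  { assert (0 <= w * (Z + lam / 8 * T)) by (apply Rmult_le_pos; [lra|assert (0 <= lam / 8 * T) by (apply Rmult_le_pos; lra); lra]).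
    replace (2 * Rad ^ 2 * (w * (/ 2 * S + Z + lam / 8 * T))) with (Rad ^ 2 * (w * S) + 2 * Rad ^ 2 * (w * (Z + lam / 8 * T))) by field.
    assert (0 <= 2 * Rad ^ 2 * (w * (Z + lam / 8 * T))) by (apply Rmult_le_pos; lra). lra. }
  assert (E3 : 0 <= 8 / lam) by (apply Rlt_le, Rdiv_lt_0_compat; lra).
  unfold K0.
  set (D := w * (/ 2 * S + Z + lam / 8 * T)) in *.
  set (Pq := p ^ 2 + q ^ 2) in *. set (Fe := eps ^ 2 * (F1 ^ 2 + F2 ^ 2)) in *.
  assert (0 <= Rad ^ 2 / 2 * Pq) by (apply Rmult_le_pos; lra).
  assert (0 <= 2 * Rad ^ 2 * Pq) by (apply Rmult_le_pos; lra).
  assert (0 <= 8 / lam * Pq) by (apply Rmult_le_pos; lra).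
  assert (0 <= 2 * Fe) by lra.
  assert (0 <= 2 * Rad ^ 2 * Fe) by (apply Rmult_le_pos; lra).
  assert (0 <= 8 / lam * Fe) by (apply Rmult_le_pos; lra).
  assert (0 <= 2 * D) by lra.
  assert (0 <= Rad ^ 2 / 2 * D) by (apply Rmult_le_pos; lra).
  replace (/ 2 * Rad ^ 2 * Fe) with (Rad ^ 2 / 2 * Fe) by field.
  ring_simplify. lra.
Qed.

Lemma RI_RInt g a b : ex_RInt g a b -> RI g a b = RInt g a b.
Proof.
  intro H. unfold RI. destruct (excluded_middle_informative _) as [E|E].
  - symmetry. apply RInt_Reals.
  - exfalso. apply E. exists (ex_RInt_Reals_0 _ _ _ H). auto.
Qed.

Lemma disc_DI Rad h : 0 < Rad -> C2 h -> disc_int Rad h = DI Rad h.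
Proof.
  intros HR Hh. unfold disc_int.
  replace (fun y1 => RI (fun y2 => h y1 y2) (- sqrt (Rad ^ 2 - y1 ^ 2)) (sqrt (Rad ^ 2 - y1 ^ 2)))
    with (CI Rad h).
  apply RI_RInt. apply exR. intro; apply CI_cont2; auto.
  extensionality y1. unfold CI, sg. symmetry. apply RI_RInt. apply exR. apply C2_slice; auto.
Qed.

Lemma rr_in_disc Rad x t : 0 < Rad -> Rabs x <= Rad -> Rabs t <= sg Rad x -> rr x t <= Rad.
Proof.
  intros HR Hx Ht. unfold rr.
  assert (Q : 0 <= Rad ^ 2 - x ^ 2) by (rewrite <- (pow2_abs x); pose proof (Rabs_pos x); simpl; nra).
  assert (t ^ 2 <= Rad ^ 2 - x ^ 2).
  { rewrite <- (pow2_abs t). rewrite <- (pow2_sqrt (Rad ^ 2 - x ^ 2)) by auto.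
    fold (sg Rad x). pose proof (Rabs_pos t). simpl. nra. }
  rewrite <- (sqrt_pow2 Rad) by lra. apply sqrt_le_1_alt. lra.
Qed.

Lemma DI_abs_le Rad h g : 0 < Rad -> C2 h -> C2 g ->
  (forall a b, rr a b <= Rad -> Rabs (h a b) <= g a b) -> Rabs (DI Rad h) <= DI Rad g.
Proof.
  intros HR Hh Hg Hb. unfold DI.
  eapply Rle_trans. apply abs_RInt_le. lra. apply exR; intro; apply CI_cont2; auto.
  apply RInt_le. lra.
  apply exR. intro. apply (continuous_comp (CI Rad h) Rabs). apply CI_cont2; auto. apply continuous_Rabs.
  apply exR; intro; apply CI_cont2; auto.
  intros x Hx. unfold CI.
  assert (S0 := sg_nonneg Rad x).
  eapply Rle_trans. apply abs_RInt_le. lra. apply exR; apply C2_slice; auto.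
  apply RInt_le. lra.
  apply exR. intro. apply (continuous_comp (h x) Rabs). apply C2_slice; auto. apply continuous_Rabs.
  apply exR; apply C2_slice; auto.
  intros t Ht. apply Hb. apply rr_in_disc; auto. apply Rabs_le; lra. apply Rabs_le; lra.
Qed.

Lemma pt_bound Rad Cf f lam eps U s a b : 0 < Rad -> fgood Rad Cf f -> 0 < lam -> 0 < eps ->
  smooth_config U -> rr a b <= Rad ->
  Rabs (Gr f a b * Xk U d1 s a b - Gr f b a * Xk U d2 s a b)
  <= Cf * K0 Rad lam * rhs_density eps lam U s a b.
Proof.
  intros HR Hf Hl He HU Hr. pose proof Hf as [_ [_ [_ [HC _]]]].
  set (w := a ^ 2 + b ^ 2).
  assert (Hw : rr a b ^ 2 = w) by (unfold rr, w; apply pow2_sqrt; pose proof (pow2_ge_0 a); pose proof (pow2_ge_0 b); lra).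
  assert (Hw0 : 0 <= w) by (pose proof (pow2_ge_0 a); pose proof (pow2_ge_0 b); unfold w; lra).
  assert (HwR : w <= Rad ^ 2) by (rewrite <- Hw; apply pow_incr; split; auto; apply rr_nonneg).
  assert (G1 := Gr_bound Rad Cf f a b Hf Hr).
  assert (G2 := Gr_bound Rad Cf f b a Hf ltac:(rewrite rr_sym; auto)).
  rewrite rr_sym, Hw in G2. rewrite Hw in G1.
  assert (Hm : Rabs (Gr f a b * Xk U d1 s a b - Gr f b a * Xk U d2 s a b)
     <= Cf * (w * (Rabs (Xk U d1 s a b) + Rabs (Xk U d2 s a b)))).
  { eapply Rle_trans. apply Rabs_triang. rewrite Rabs_Ropp, !Rabs_mult.
    pose proof (Rabs_pos (Xk U d1 s a b)); pose proof (Rabs_pos (Xk U d2 s a b)).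
    assert (Rabs (Gr f a b) * Rabs (Xk U d1 s a b) <= Cf * w * Rabs (Xk U d1 s a b)) by (apply Rmult_le_compat_r; auto).
    assert (Rabs (Gr f b a) * Rabs (Xk U d2 s a b) <= Cf * w * Rabs (Xk U d2 s a b)) by (apply Rmult_le_compat_r; auto).
    lra. }
  eapply Rle_trans. apply Hm. rewrite Rmult_assoc. apply Rmult_le_compat_l; auto.
  rewrite !X_alg by auto.
  unfold rhs_density, e_nu, Dsq. fold w.
  apply alg_bound; auto.
Qed.

Ltac ct := repeat first [apply c3_plus | apply c3_minus | apply c3_mult | apply c3_pow | apply c3_const
  | apply c3_p1 | apply c3_p2 | (apply sm_cont; smt)].

Lemma rho_cont eps lam U : smooth_config U -> continuous3 (rhs_density eps lam U).
Proof.
  intro H. pose proof H as [Hu [Hv _]].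
  pose proof (sm_cA U d0 H). pose proof (sm_cA U d1 H). pose proof (sm_cA U d2 H).
  unfold rhs_density, e_nu, Dsq, Dre, Dim, Fc, phisq. ct.
Qed.

Lemma fgood_of Rad f (Hf_smooth : smooth1 f) (HfR : f Rad = 0)
  (Hf_deriv : exists Cf : R, forall r l, 0 <= r <= Rad ->
       derivable_pt_lim f r l -> - Cf * r ^ 2 <= l <= 0) :
  exists Cf, fgood Rad Cf f.
Proof.
  destruct Hf_deriv as [C0 HC].
  assert (D : forall x, derivable_pt_lim f x (deriv1 f x)).
  { intro x. destruct (Hf_smooth 0%nat x) as [l Hl]. simpl in Hl.
    rewrite (deriv1_spec _ _ _ Hl). auto. }
  exists (Rabs C0). repeat split; auto.
  - intro x. destruct (Hf_smooth 1%nat x) as [l Hl]. simpl in Hl.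
    apply derivable_continuous_pt. exists l. exact Hl.
  - intros c Hc. destruct (HC c (deriv1 f c) Hc (D c)) as [A B].
    rewrite Rabs_left1 by lra. assert (C0 * c ^ 2 <= Rabs C0 * c ^ 2).
    { apply Rmult_le_compat_r. apply pow2_ge_0. apply RRle_abs. } lra.
  - apply Rabs_pos.
Qed.

Theorem proposition3p1 (Rad : R) (m : Z) (lam : R) (f : R -> R)
  (HR : 0 < Rad) (Hlam : 0 < lam)
  (Hf_smooth : smooth1 f)
  (Hf_range : forall r, 0 <= r <= Rad -> 0 <= f r <= 1)
  (Hf0 : f 0 = 1) (HfR : f Rad = 0)
  (Hf_deriv : exists Cf : R, forall r l, 0 <= r <= Rad ->
       derivable_pt_lim f r l -> - Cf * r ^ 2 <= l <= 0) :
  exists C : R, forall (eps T : R) (U : config),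
    0 < eps -> 0 < T -> smooth_config U ->
    forall t : R, 0 < t < T ->
      Rabs (Dconf m Rad f U t - Dconf m Rad f U 0)
      <= C * spacetime_int t Rad (rhs_density eps lam U).
Proof.
  destruct (fgood_of Rad f Hf_smooth HfR Hf_deriv) as [Cf Hf].
  pose proof Hf as [_ [_ [_ [HC _]]]].
  exists (/ 2 * (Cf * K0 Rad lam)).
  intros eps T U Heps HT HU t Ht.
  assert (HK0 : 0 <= K0 Rad lam).
  { unfold K0. assert (0 <= Rad ^ 2) by apply pow2_ge_0. assert (0 < 8 / lam) by (apply Rdiv_lt_0_compat; lra). lra. }
  assert (Hom := sm_omega U HU).
  assert (CF3 : continuous3 (fun _ a b => f (rr a b))) by (apply c2_c3; intros; apply (fr_cont Rad Cf); auto).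
  set (k := fun s a b => f (rr a b) * omega U s a b).
  set (kd := fun s a b => f (rr a b) * pd d0 (omega U) s a b).
  assert (Ck : continuous3 k) by (apply c3_mult; auto; apply sm_cont; auto).
  assert (Ckd : continuous3 kd) by (apply c3_mult; auto; apply sm_cont; apply sm_pd; auto).
  assert (Dk : forall s a b, derivable_pt_lim (fun z => k z a b) s (kd s a b)).
  { intros s a b. apply (derivable_pt_lim_scal (fun z => omega U z a b) (f (rr a b)) s).
    apply (pd_spec d0 (omega U) s a b). apply sm_has; auto. }
  set (rho := rhs_density eps lam U).
  assert (Crho : continuous3 rho) by (apply rho_cont; auto).
  assert (C2k : forall s, C2 (k s)) by (intros s x y; apply c3_2d_12; auto).
  assert (C2rho : forall s, C2 (rho s)) by (intros s x y; apply c3_2d_12; auto).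
  assert (E1 : Dconf m Rad f U t - Dconf m Rad f U 0 = - (DI Rad (k t) - DI Rad (k 0))).
  { unfold Dconf. rewrite !disc_DI by (auto; first [apply (C2k t) | apply (C2k 0)]). unfold k, rr. ring. }
  rewrite E1, Rabs_Ropp.
  rewrite (DI_FTC Rad k kd t) by auto.
  set (X1 := Xk U d1). set (X2 := Xk U d2).
  assert (SX1 := sm_X U d1 HU). assert (SX2 := sm_X U d2 HU). fold X1 in SX1. fold X2 in SX2.
  assert (CGr : C2 (fun a b => Gr f b a)) by (apply C2_swap; intros x y; apply (Gr_cont Rad Cf); auto).
  assert (CGr' : C2 (Gr f)) by (intros x y; apply (Gr_cont Rad Cf); auto).
  assert (CF : C2 (fun a b => f (rr a b))) by (intros x y; apply (fr_cont Rad Cf); auto).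
  assert (E3 : forall s, DI Rad (kd s) =
     / 2 * DI Rad (fun a b => Gr f a b * X1 s a b - Gr f b a * X2 s a b)).
  { intro s.
    rewrite (DI_ext_aux Rad (kd s) (fun a b => / 2 * (f (rr a b) * (pd d1 X2 s a b - pd d2 X1 s a b)))).
    rewrite DI_scal; auto.
    rewrite (spatial Rad Cf f (X1 s) (X2 s) (pd d2 X1 s) (pd d1 X2 s)); auto.
    - intros x y; apply c3_2d_12; apply sm_cont; auto.
    - intros x y; apply c3_2d_12; apply sm_cont; auto.
    - intros x y; apply c3_2d_12; apply sm_cont; apply sm_pd; auto.
    - intros x y; apply c3_2d_12; apply sm_cont; apply sm_pd; auto.
    - intros a b. apply (pd_spec d2 X1 s a b). apply sm_has; auto.
    - intros a b. apply (pd_spec d1 X2 s a b). apply sm_has; auto.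
    - apply C2_mult; auto. apply C2_minus; intros x y; apply c3_2d_12; apply sm_cont; apply sm_pd; auto.
    - intros a b. unfold kd, X1, X2. rewrite <- omega_id by auto. field. }
  assert (B4 : forall s, Rabs (DI Rad (kd s)) <= / 2 * (Cf * K0 Rad lam) * DI Rad (rho s)).
  { intro s. rewrite E3. rewrite Rabs_mult, Rabs_right by lra.
    rewrite Rmult_assoc. apply Rmult_le_compat_l. lra.
    rewrite <- DI_scal; auto.
    apply DI_abs_le; auto.
    - apply C2_minus; apply C2_mult; auto; intros x y; apply c3_2d_12; apply sm_cont; auto.
    - intros x y. apply continuity_2d_pt_mult. apply continuity_2d_pt_const. apply C2rho.
    - intros a b Hr. apply pt_bound; auto. }
  assert (Ckd' : forall z, continuous (fun s => DI Rad (kd s)) z) by (intro; apply DI_cont; auto).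
  assert (Crho' : forall z, continuous (fun s => DI Rad (rho s)) z) by (intro; apply DI_cont; auto).
  eapply Rle_trans. apply abs_RInt_le. lra. apply exR; auto.
  eapply Rle_trans. apply RInt_le with (g := fun s => / 2 * (Cf * K0 Rad lam) * DI Rad (rho s)). lra.
  apply exR. intro. apply (continuous_comp (fun s => DI Rad (kd s)) Rabs). auto. apply continuous_Rabs.
  apply exR. intro. apply (continuous_scal_r (K:=R_AbsRing) (V:=R_NormedModule)). auto.
  intros x _. apply B4.
  rewrite RIntR_scal by (apply exR; auto).
  right. f_equal.
  unfold spacetime_int. fold rho.
  assert (ED : (fun y0 => disc_int Rad (rho y0)) = (fun s => DI Rad (rho s))).
  { extensionality y0. apply disc_DI; auto. }
  rewrite ED. symmetry. apply RI_RInt. apply exR; auto.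
Qed.
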